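(* Let $L\ge2$, let $S=(d,N_1,\dots,N_{L-1},1)$ be a neural network architecture, let $B>0$, and let $\varrho:\mathbb{R}\to\mathbb{R}$. Assume at least one of the following: (i) $N_{L-1}\ge2$ and $\varrho\in C^1(\mathbb{R})\setminus C^\infty(\mathbb{R})$; (ii) $N_{L-1}\ge2$ and $\varrho$ is bounded, analytic, and not constant; (iii) $\varrho$ is approximately homogeneous of order $(r,q)$ for some $r,q\in\mathbb{N}_0$ with $r\ne q$, and $\varrho\in C^{\max\{r,q\}}(\mathbb{R})$. Then $\mathcal{RNN}_\varrho^{[-B,B]^d}(S)$ is not closed in $C([-B,B]^d)$ (with the supremum norm).
   Context: A neural network with architecture $S=(N_0,\dots,N_L)$ ($N_0=d$) is a family $\Phi=((A_\ell,b_\ell))_{\ell=1}^L$, $A_\ell\in\mathbb{R}^{N_\ell\times N_{\ell-1}}$, $b_\ell\in\mathbb{R}^{N_\ell}$; $\mathcal{NN}(S)$ is the set of these. For $\varrho:\mathbb{R}\to\mathbb{R}$ and $\Omega\subset\mathbb{R}^d$, $\mathrm{R}_\varrho^\Omega(\Phi):\Omega\to\mathbb{R}^{N_L}$, $x\mapsto x_L$, where $x_0=x$, $x_\ell=\varrho(A_\ell x_{\ell-1}+b_\ell)$ for $1\le\ell\le L-1$ (componentwise), $x_L=A_Lx_{L-1}+b_L$; $\mathcal{RNN}_\varrho^\Omega(S)=\{\mathrm{R}_\varrho^\Omega(\Phi):\Phi\in\mathcal{NN}(S)\}$. A function $f:\mathbb{R}\to\mathbb{R}$ is approximately homogeneous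 of order $(r,q)\in\mathbb{N}_0^2$ if there is $s>0$ with $|f(x)-x^r|\le s$ for all $x\ge0$ and $|f(x)-x^q|\le s$ for all $x\le0$. *)

(* Defs.v *)
From Stdlib Require Import Reals List.
From Coquelicot Require Import Coquelicot.
Open Scope R_scope.

Definition rsum (n : nat) (f : nat -> R) : R :=
  fold_right Rplus 0 (map f (seq 0 n)).

(* Vectors in R^m are encoded as functions nat -> R (only indices < m matter);
   the weights of layer l (1 <= l <= L) are  A l : nat -> nat -> R  (row i, column j,
   only i < N_l, j < N_(l-1) matter) and the biases  b l : nat -> R.
   dims l = N_l.  *)

Fixpoint hidden_out (rho : R -> R) (dims : nat -> nat)
  (A : nat -> nat -> nat -> R) (b : nat -> nat -> R) (l : nat) (x : nat -> R)
  : nat -> R :=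
  match l with
  | O => x
  | S l' => fun i =>
      rho (rsum (dims l') (fun j => A l i j * hidden_out rho dims A b l' x j) + b l i)
  end.

(* Realization of the network with architecture S = (d, N_1, ..., N_(L-1), 1),
   given as  d  and  Ns = [N_1; ...; N_(L-1)]  (so L = length Ns + 1):
   x_L = A_L x_(L-1) + b_L  (a scalar, since N_L = 1). *)
Definition arch_dims (d : nat) (Ns : list nat) (l : nat) : nat := nth l (d :: Ns) 0%nat.

Definition realization (rho : R -> R) (d : nat) (Ns : list nat)
  (A : nat -> nat -> nat -> R) (b : nat -> nat -> R) (x : nat -> R) : R :=
  let L := S (length Ns) in
  let dims := arch_dims d Ns in
  rsum (dims (pred L)) (fun j => A L 0%nat j * hidden_out rho dims A b (pred L) x j)
  + b L 0%nat.

Definition in_cube (d : nat) (B : R) (x : nat -> R) : Prop :=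
  forall i, (i < d)%nat -> - B <= x i <= B.

Definition in_RNN (rho : R -> R) (d : nat) (Ns : list nat) (B : R)
  (f : (nat -> R) -> R) : Prop :=
  exists A b, forall x, in_cube d B x -> f x = realization rho d Ns A b x.

Definition cont_on_cube (d : nat) (B : R) (g : (nat -> R) -> R) : Prop :=
  forall x, in_cube d B x -> forall eps, 0 < eps -> exists delta, 0 < delta /\
    forall y, in_cube d B y -> (forall i, (i < d)%nat -> Rabs (y i - x i) < delta) ->
      Rabs (g y - g x) < eps.

Definition unif_conv_on_cube (d : nat) (B : R) (fs : nat -> (nat -> R) -> R)
  (g : (nat -> R) -> R) : Prop :=
  forall eps, 0 < eps -> exists N, forall n, (N <= n)%nat ->
    forall x, in_cube d B x -> Rabs (fs n x - g x) <= eps.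

(* RNN is not closed in (C([-B,B]^d), sup norm): some g in C([-B,B]^d) is a uniform
   limit of realizations but is not itself a realization
   (C([-B,B]^d) is a metric space, so closed = sequentially closed). *)
Definition RNN_not_closed (rho : R -> R) (d : nat) (Ns : list nat) (B : R) : Prop :=
  exists (fs : nat -> (nat -> R) -> R) (g : (nat -> R) -> R),
    (forall n, in_RNN rho d Ns B (fs n)) /\ cont_on_cube d B g /\
    unif_conv_on_cube d B fs g /\ ~ in_RNN rho d Ns B g.

Definition Ck (k : nat) (f : R -> R) : Prop :=
  (forall m x, (m <= k)%nat -> ex_derive_n f m x) /\
  (forall x, continuous (Derive_n f k) x).

Definition Cinf (f : R -> R) : Prop := forall k, Ck k f.

Definition bounded_fun (f : R -> R) : Prop := exists M, forall x, Rabs (f x) <= M.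

Definition analytic (f : R -> R) : Prop :=
  forall x0, exists (a : nat -> R) (r : R), 0 < r /\
    forall x, Rabs (x - x0) < r -> is_pseries a (x - x0) (f x).

Definition constant_fun (f : R -> R) : Prop := forall x y, f x = f y.

Definition approx_homogeneous (r q : nat) (f : R -> R) : Prop :=
  exists s, 0 < s /\
    (forall x, 0 <= x -> Rabs (f x - x ^ r) <= s) /\
    (forall x, x <= 0 -> Rabs (f x - x ^ q) <= s).

(* Main.v *)
Require Import Defs.
From Stdlib Require Import Reals List Lia Lra Arith ZArith Classical.
From Coquelicot Require Import Coquelicot.
Open Scope R_scope.

Fixpoint Pk (k : nat) (f : R -> R) : Prop :=
  match k with
  | O => forall x, continuous f x
  | S k' => exists f', (forall x, is_derive f x (f' x)) /\ Pk k' f'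
  end.

Lemma Pk_cont k f : Pk k f -> forall x, continuous f x.
Proof.
  destruct k as [|k]; simpl; auto.
  intros [f' [H _]] x. apply (@ex_derive_continuous R_AbsRing R_NormedModule f x). exists (f' x). apply H.
Qed.

Lemma Pk_mono k f : Pk (S k) f -> Pk k f.
Proof.
  revert f; induction k as [|k IH]; intros f H.
  - intros x; exact (Pk_cont 1 f H x).
  - destruct H as [f' [Hd HP]]. exists f'. split; auto.
Qed.

Lemma Pk_ext k f g : (forall x, f x = g x) -> Pk k f -> Pk k g.
Proof.
  destruct k as [|k]; simpl.
  - intros E H x. apply (continuous_ext f); auto.
  - intros E [f' [Hd HP]]. exists f'. split; auto.
    intros x. apply (is_derive_ext f); auto.
Qed.

Lemma Pk_const k c : Pk k (fun _ => c).
Proof.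
  revert c; induction k as [|k IH]; intros c; simpl.
  - intros x. apply continuous_const.
  - exists (fun _ => 0). split; [|exact (IH 0)]. intros x. apply (is_derive_const c x).
Qed.

Lemma Pk_id k : Pk k (fun t => t).
Proof.
  destruct k as [|k]; simpl.
  - intros x. apply continuous_id.
  - exists (fun _ => 1). split; [|apply Pk_const]. intros x. apply (is_derive_id x).
Qed.

Lemma Pk_plus k f g : Pk k f -> Pk k g -> Pk k (fun t => f t + g t).
Proof.
  revert f g; induction k as [|k IH]; simpl; intros f g Hf Hg.
  - intros x. apply (continuous_plus f g); auto.
  - destruct Hf as [f' [Hf Pf]]. destruct Hg as [g' [Hg Pg]].
    exists (fun t => f' t + g' t). split; auto.
    intros x. apply (is_derive_plus f g); auto.
Qed.

Lemma Pk_mult k f g : Pk k f -> Pk k g -> Pk k (fun t => f t * g t).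
Proof.
  revert f g; induction k as [|k IH]; intros f g Hf Hg.
  - simpl in *. intros x. apply (continuous_mult f g); auto.
  - pose proof (Pk_mono _ _ Hf) as Mf. pose proof (Pk_mono _ _ Hg) as Mg.
    destruct Hf as [f' [Hf Pf]]. destruct Hg as [g' [Hg Pg]].
    exists (fun t => f' t * g t + f t * g' t). split.
    + intros x. apply (is_derive_mult f g); auto. intros; apply Rmult_comm.
    + apply Pk_plus; apply IH; auto.
Qed.

Lemma Pk_comp k g h : Pk k g -> Pk k h -> Pk k (fun t => g (h t)).
Proof.
  revert g h; induction k as [|k IH]; intros g h Hg Hh.
  - simpl in *. intros x. apply (continuous_comp h g); auto.
  - pose proof (Pk_mono _ _ Hh) as Mh.
    destruct Hg as [g' [Hg Pg]]. destruct Hh as [h' [Hh Ph]].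
    exists (fun t => h' t * g' (h t)). split.
    + intros x. apply (is_derive_comp g h); auto.
    + apply Pk_mult; auto.
Qed.

Lemma Derive_n_Sshift f m x : Derive_n f (S m) x = Derive_n (Derive f) m x.
Proof.
  revert x; induction m as [|m IH]; intros x; [reflexivity|].
  simpl. apply Derive_ext. intros t. apply IH.
Qed.

Lemma ex_derive_n_Sshift f m x :
  ex_derive_n f (S (S m)) x <-> ex_derive_n (Derive f) (S m) x.
Proof.
  simpl. split; apply ex_derive_ext; intros t.
  - apply (Derive_n_Sshift f m t).
  - symmetry; apply (Derive_n_Sshift f m t).
Qed.

Lemma Pk_to_Ck k f : Pk k f -> Ck k f.
Proof.
  revert f; induction k as [|k IH]; intros f H.
  - split.
    + intros m x Hm. destruct m; [exact I| lia].
    + intros x. simpl. apply (continuous_ext f); [intros; reflexivity|]. exact (H x).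
  - destruct H as [f' [Hd HP]].
    assert (E : forall x, Derive f x = f' x) by (intros; apply is_derive_unique; auto).
    destruct (IH f' HP) as [IH1 IH2]. split.
    + intros m x Hm. destruct m as [|[|m]].
      * exact I.
      * simpl. exists (f' x). apply (is_derive_ext f); auto.
      * apply ex_derive_n_Sshift. apply (ex_derive_n_ext f').
        { intros; symmetry; apply E. } apply IH1. lia.
    + intros x. apply (continuous_ext (Derive_n f' k)).
      { intros t. rewrite Derive_n_Sshift. apply Derive_n_ext. intros; symmetry; apply E. }
      apply IH2.
Qed.

Lemma Ck_to_Pk k f : Ck k f -> Pk k f.
Proof.
  intros [H1 H2].
  assert (G : forall j, (j <= k)%nat -> Pk j (Derive_n f (k - j))).
  { induction j as [|j IH]; intros Hj.
    - simpl. replace (k - 0)%nat with k by lia. apply H2.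
    - exists (Derive_n f (k - j)). split.
      + intros x. replace (k - j)%nat with (S (k - S j)) by lia.
        simpl. apply Derive_correct.
        specialize (H1 (S (k - S j)) x ltac:(lia)). exact H1.
      + apply IH. lia. }
  apply (Pk_ext k (Derive_n f (k - k))).
  - intros x. replace (k - k)%nat with 0%nat by lia. reflexivity.
  - apply G. lia.
Qed.

Lemma fold_plus_shift (l : list R) a c :
  fold_right Rplus (a + c) l = fold_right Rplus a l + c.
Proof. induction l; simpl; [reflexivity| rewrite IHl; ring]. Qed.

Lemma rsum_S n f : rsum (S n) f = rsum n f + f n.
Proof.
  unfold rsum. rewrite seq_S, map_app, fold_right_app. simpl.
  replace (f n + 0) with (0 + f n) by ring. apply fold_plus_shift.
Qed.

Lemma rsum_0 f : rsum 0 f = 0.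
Proof. reflexivity. Qed.

Lemma rsum_ext n f g : (forall j, (j < n)%nat -> f j = g j) -> rsum n f = rsum n g.
Proof.
  induction n as [|n IH]; intros H; [reflexivity|].
  rewrite !rsum_S, IH by (intros; apply H; lia). rewrite H by lia. reflexivity.
Qed.

Lemma Pk_rsum k n (F : nat -> R -> R) :
  (forall j, (j < n)%nat -> Pk k (F j)) -> Pk k (fun t => rsum n (fun j => F j t)).
Proof.
  induction n as [|n IH]; intros H.
  - apply (Pk_ext k (fun _ => 0)); [intros; reflexivity| apply Pk_const].
  - apply (Pk_ext k (fun t => rsum n (fun j => F j t) + F n t)).
    { intros; symmetry; apply rsum_S. }
    apply Pk_plus; [apply IH; intros; apply H; lia| apply H; lia].
Qed.

Definition xline (t : R) : nat -> R := fun i => if Nat.eqb i 0 then t else 0.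

Lemma hidden_Pk k rho dims A b : Pk k rho ->
  forall l i, Pk k (fun t => hidden_out rho dims A b l (xline t) i).
Proof.
  intros Hr l. induction l as [|l IH]; intros i; simpl.
  - unfold xline. destruct (Nat.eqb i 0); [apply Pk_id| apply Pk_const].
  - apply (Pk_comp k rho (fun t => rsum (dims l) (fun j => A (S l) i j * hidden_out rho dims A b l (xline t) j) + b (S l) i)); auto.
    apply Pk_plus; [|apply Pk_const]. apply Pk_rsum. intros j _.
    apply Pk_mult; [apply Pk_const| apply IH].
Qed.

Lemma real_line_Pk k rho d Ns A b : Pk k rho ->
  Pk k (fun t => realization rho d Ns A b (xline t)).
Proof.
  intros Hr. unfold realization.
  apply Pk_plus; [|apply Pk_const]. apply Pk_rsum. intros j _.
  apply Pk_mult; [apply Pk_const| apply hidden_Pk; auto].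
Qed.

Definition Tmap (rho : R -> R) (eps z0 kk : R) (s : R) := (rho (eps * s + z0) - rho z0) * kk.
Fixpoint Uit rho eps z0 kk (n : nat) (t : R) : R :=
  match n with O => t | S n => Tmap rho eps z0 kk (Uit rho eps z0 kk n t) end.

Definition wt (l : nat) (kk al : R) := if Nat.eqb l 1 then al else al * kk.
Definition bs (rho : R -> R) z0 (l : nat) kk al be :=
  if Nat.eqb l 1 then be else be - al * kk * rho z0.
Definition lay_al0 (L1 : nat) (eps al0 : R) (l : nat) : R := if Nat.ltb l L1 then eps else al0.
Definition lay_be0 (L1 : nat) (z0 be0 : R) (l : nat) : R := if Nat.ltb l L1 then z0 else be0.

Definition Anet L1 eps kk al0 al1 a0 a1 (l i j : nat) : R :=
  if Nat.eqb l (S L1) then (if Nat.eqb j 0 then a0 else if Nat.eqb j 1 then a1 else 0)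
  else if Nat.eqb j 0 then
    (if Nat.eqb i 0 then wt l kk (lay_al0 L1 eps al0 l)
     else if Nat.eqb i 1 then wt l kk al1 else 0)
  else 0.

Definition bnet rho L1 eps z0 kk al0 be0 al1 be1 c (l i : nat) : R :=
  if Nat.eqb l (S L1) then c
  else if Nat.eqb i 0 then bs rho z0 l kk (lay_al0 L1 eps al0 l) (lay_be0 L1 z0 be0 l)
  else if Nat.eqb i 1 then bs rho z0 l kk al1 be1 else 0.

Lemma rsum_first n w (h : nat -> R) : (1 <= n)%nat ->
  rsum n (fun j => (if Nat.eqb j 0 then w else 0) * h j) = w * h 0%nat.
Proof.
  induction n as [|n IH]; intros Hn; [lia|].
  rewrite rsum_S. destruct n as [|n].
  - simpl. unfold rsum; simpl. ring.
  - rewrite IH by lia. simpl. ring.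
Qed.

Lemma rsum_two n a0 a1 (h : nat -> R) : (1 <= n)%nat -> (a1 = 0 \/ (2 <= n)%nat) ->
  rsum n (fun j => (if Nat.eqb j 0 then a0 else if Nat.eqb j 1 then a1 else 0) * h j)
  = a0 * h 0%nat + a1 * h 1%nat.
Proof.
  intros Hn Ha.
  assert (G : forall m, (2 <= m)%nat -> rsum m (fun j => (if Nat.eqb j 0 then a0 else if Nat.eqb j 1 then a1 else 0) * h j)
  = a0 * h 0%nat + a1 * h 1%nat).
  { induction m as [|m IH]; intros Hm; [lia|].
    rewrite rsum_S. destruct (Nat.eq_dec m 1) as [->|Hm1].
    - unfold rsum; simpl. ring.
    - rewrite IH by lia. destruct m as [|[|m]]; [lia|lia|]. simpl. ring. }
  destruct (Compare_dec.le_lt_dec 2 n) as [H2|H2]; [apply G; auto|].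
  destruct Ha as [Ha|Ha]; [|lia]. subst a1. replace n with 1%nat by lia.
  unfold rsum; simpl. ring.
Qed.

Lemma dims_pos d Ns l : (1 <= d)%nat -> (forall N, In N Ns -> (1 <= N)%nat) ->
  (l <= length Ns)%nat -> (1 <= arch_dims d Ns l)%nat.
Proof.
  intros Hd HN Hl. unfold arch_dims. destruct l as [|l]; simpl; auto.
  apply HN. apply nth_In. lia.
Qed.

Lemma dims_last d Ns : Ns <> nil -> arch_dims d Ns (length Ns) = last Ns 0%nat.
Proof.
  unfold arch_dims. revert d. induction Ns as [|a Ns IH]; intros d H; [congruence|].
  destruct Ns as [|b Ns'].
  - reflexivity.
  - change (nth (length (b::Ns')) (a :: b :: Ns') 0%nat = last (b :: Ns') 0%nat).
    apply IH; congruence.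
Qed.

Section Net.
Variables (rho : R -> R) (d : nat) (Ns : list nat).
Variables (eps z0 kk al0 be0 al1 be1 a0 a1 c : R).
Hypothesis Hd : (1 <= d)%nat.
Hypothesis HN : forall N, In N Ns -> (1 <= N)%nat.
Hypothesis Hne : Ns <> nil.

Let L1 := length Ns.
Let dims := arch_dims d Ns.
Let AA := Anet L1 eps kk al0 al1 a0 a1.
Let bb := bnet rho L1 eps z0 kk al0 be0 al1 be1 c.
Let U := Uit rho eps z0 kk.

Lemma L1pos : (1 <= L1)%nat.
Proof. unfold L1. destruct Ns; [congruence| simpl; lia]. Qed.

Lemma AA_lay l i j : l <> S L1 -> AA l i j =
  (if Nat.eqb j 0 then (if Nat.eqb i 0 then wt l kk (lay_al0 L1 eps al0 l)
     else if Nat.eqb i 1 then wt l kk al1 else 0) else 0).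
Proof. intros H. unfold AA, Anet. apply Nat.eqb_neq in H. rewrite H. reflexivity. Qed.

Lemma hidden_S l x i : hidden_out rho dims AA bb (S l) x i =
  rho (rsum (dims l) (fun j => AA (S l) i j * hidden_out rho dims AA bb l x j) + bb (S l) i).
Proof. reflexivity. Qed.

Lemma hidden_net : forall l x, (1 <= l <= L1)%nat ->
  hidden_out rho dims AA bb l x 0%nat = rho (lay_al0 L1 eps al0 l * U (l - 1) (x 0%nat) + lay_be0 L1 z0 be0 l)
  /\ hidden_out rho dims AA bb l x 1%nat = rho (al1 * U (l - 1) (x 0%nat) + be1).
Proof.
  pose proof L1pos as HL.
  induction l as [|l IH]; intros x Hl; [lia|].
  assert (Hneq : S l <> S L1) by lia.
  assert (Hb0 : bb (S l) 0%nat = bs rho z0 (S l) kk (lay_al0 L1 eps al0 (S l)) (lay_be0 L1 z0 be0 (S l))).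
  { unfold bb, bnet. apply Nat.eqb_neq in Hneq. rewrite Hneq. reflexivity. }
  assert (Hb1 : bb (S l) 1%nat = bs rho z0 (S l) kk al1 be1).
  { unfold bb, bnet. apply Nat.eqb_neq in Hneq. rewrite Hneq. reflexivity. }
  assert (Hdl : (1 <= dims l)%nat) by (apply dims_pos; auto; unfold L1 in *; lia).
  rewrite !hidden_S, Hb0, Hb1.
  rewrite (rsum_ext _ _ (fun j => (if Nat.eqb j 0 then wt (S l) kk (lay_al0 L1 eps al0 (S l)) else 0) * hidden_out rho dims AA bb l x j))
    by (intros j _; rewrite AA_lay by auto; reflexivity).
  rewrite (rsum_ext _ (fun j => AA (S l) 1%nat j * _) (fun j => (if Nat.eqb j 0 then wt (S l) kk al1 else 0) * hidden_out rho dims AA bb l x j))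
    by (intros j _; rewrite AA_lay by auto; reflexivity).
  rewrite !(rsum_first _ _ _ Hdl).
  destruct l as [|l].
  - simpl. unfold wt, bs. simpl. split; reflexivity.
  - destruct (IH x ltac:(lia)) as [IH0 _]. rewrite IH0.
    assert (Hlt : Nat.ltb (S l) L1 = true) by (apply Nat.ltb_lt; lia).
    unfold lay_al0 at 2, lay_be0 at 2. rewrite Hlt.
    replace (S (S l) - 1)%nat with (S l) by lia. replace (S l - 1)%nat with l by lia.
    unfold wt, bs. simpl (Nat.eqb (S (S l)) 1).
    unfold U. simpl Uit. unfold Tmap. split; f_equal.
    all: try (unfold lay_al0, lay_be0; rewrite Hlt); idtac.
    all: ring_simplify; try reflexivity.
Qed.

Definition NF (x : nat -> R) : R :=
  a0 * rho (al0 * U (L1 - 1) (x 0%nat) + be0) + a1 * rho (al1 * U (L1 - 1) (x 0%nat) + be1) + c.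

Lemma net_real : (a1 = 0 \/ (2 <= last Ns 0)%nat) ->
  forall x, NF x = realization rho d Ns AA bb x.
Proof.
  intros Ha x. pose proof L1pos as HL. unfold realization. fold L1. fold dims.
  simpl pred.
  destruct (hidden_net L1 x ltac:(lia)) as [H0 H1].
  unfold AA at 1. unfold Anet at 1. rewrite Nat.eqb_refl.
  rewrite rsum_two.
  - rewrite H0, H1. unfold bb, bnet. rewrite Nat.eqb_refl.
    unfold lay_al0, lay_be0. rewrite Nat.ltb_irrefl. unfold NF. ring.
  - apply dims_pos; auto.
  - unfold dims. rewrite dims_last by auto. auto.
Qed.

End Net.

Lemma net_in_RNN rho d Ns B eps z0 kk al0 be0 al1 be1 a0 a1 c :
  (1 <= d)%nat -> (forall N, In N Ns -> (1 <= N)%nat) -> Ns <> nil ->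
  (a1 = 0 \/ (2 <= last Ns 0)%nat) ->
  in_RNN rho d Ns B (fun x => a0 * rho (al0 * Uit rho eps z0 kk (length Ns - 1) (x 0%nat) + be0)
     + a1 * rho (al1 * Uit rho eps z0 kk (length Ns - 1) (x 0%nat) + be1) + c).
Proof.
  intros Hd HN Hne Ha.
  exists (Anet (length Ns) eps kk al0 al1 a0 a1), (bnet rho (length Ns) eps z0 kk al0 be0 al1 be1 c).
  intros x _. apply (net_real rho d Ns eps z0 kk al0 be0 al1 be1 a0 a1 c Hd HN Hne Ha x).
Qed.

Lemma cont_eps f x : continuous f x ->
  forall eps, 0 < eps -> exists delta, 0 < delta /\ forall y, Rabs (y - x) < delta -> Rabs (f y - f x) < eps.
Proof.
  intros Hc eps He.
  assert (Hp : continuity_pt f x) by (apply continuity_pt_filterlim; exact Hc).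
  destruct (proj1 (continuity_pt_locally f x) Hp (mkposreal eps He)) as [del Hd].
  exists del. split; [apply cond_pos|]. intros y Hy. apply Hd. exact Hy.
Qed.

Definition Cone (rho : R -> R) := (forall x, ex_derive rho x) /\ (forall x, continuous (Derive rho) x).

Lemma mvt_rho rho : (forall x, ex_derive rho x) -> forall a b,
  exists c, Rmin a b <= c <= Rmax a b /\ rho b - rho a = Derive rho c * (b - a).
Proof.
  intros H a b. apply (MVT_gen rho a b (Derive rho)).
  - intros x _. apply Derive_correct. apply H.
  - intros x _. apply continuity_pt_filterlim. apply (@ex_derive_continuous R_AbsRing R_NormedModule). apply H.
Qed.

Lemma unif_cont f a b : (forall x, continuous f x) ->
  forall eps, 0 < eps -> exists delta, 0 < delta /\ forall x y, a <= x <= b -> a <= y <= b ->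
    Rabs (x - y) < delta -> Rabs (f x - f y) < eps.
Proof.
  intros Hc eps He.
  assert (U : uniform_continuity f (fun c => a <= c <= b)).
  { apply Heine. apply compact_P3. intros x _. apply continuity_pt_filterlim. apply Hc. }
  destruct (U (mkposreal eps He)) as [del Hd]. exists del. split; [apply cond_pos|].
  intros x y Hx Hy Hxy. apply Hd; auto.
Qed.

Lemma between_abs a b c : Rmin a b <= c <= Rmax a b -> Rabs (c - a) <= Rabs (b - a).
Proof.
  unfold Rmin, Rmax. intros H. destruct (Rle_dec a b);
  unfold Rabs; destruct (Rcase_abs (c - a)); destruct (Rcase_abs (b - a)); lra.
Qed.

Lemma T_close rho z0 : Cone rho -> Derive rho z0 <> 0 -> forall K, 0 <= K -> forall eta, 0 < eta ->
  exists e0, 0 < e0 /\ forall eps, 0 < eps < e0 -> forall s, Rabs s <= K ->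
   Rabs (Tmap rho eps z0 (/ (eps * Derive rho z0)) s - s) <= eta.
Proof.
  intros [Hd Hc] Hd0 K HK eta Heta.
  set (d0 := Derive rho z0) in *.
  assert (Hpos : 0 < Rabs d0) by (apply Rabs_pos_lt; auto).
  destruct (cont_eps _ _ (Hc z0) (eta * Rabs d0 / (K + 1))) as [del [Hdel Hdl]].
  { apply Rdiv_lt_0_compat; [apply Rmult_lt_0_compat; auto| lra]. }
  exists (del / (K + 1)). split; [apply Rdiv_lt_0_compat; lra|].
  intros eps [He1 He2] s Hs.
  destruct (mvt_rho rho Hd z0 (eps * s + z0)) as [c [Hc1 Hc2]].
  unfold Tmap. rewrite Hc2.
  replace ((Derive rho c * (eps * s + z0 - z0) * / (eps * d0) - s))
    with (s * ((Derive rho c - d0) / d0)) by (field; split; lra).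
  rewrite Rabs_mult. unfold Rdiv. rewrite Rabs_mult, Rabs_inv.
  assert (Hcz : Rabs (c - z0) < del).
  { assert (Rabs (c - z0) <= Rabs (eps * s)).
    { replace (eps * s) with ((eps * s + z0) - z0) by ring. apply between_abs. auto. }
    rewrite Rabs_mult, (Rabs_pos_eq eps) in H by lra.
    assert (eps * Rabs s <= eps * K) by (apply Rmult_le_compat_l; lra).
    assert (eps * K < del).
    { apply Rle_lt_trans with (eps * (K + 1)); [nra|].
      apply (Rmult_lt_compat_r (K+1)) in He2; [|lra].
      unfold Rdiv in He2. rewrite Rmult_assoc, Rinv_l in He2 by lra. lra. }
    lra. }
  specialize (Hdl c Hcz). fold d0 in Hdl.
  assert (Habs : Rabs (Derive rho c - d0) * / Rabs d0 <= eta / (K + 1)).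
  { apply Rmult_le_reg_r with (Rabs d0); auto.
    rewrite Rmult_assoc, Rinv_l by lra. unfold Rdiv in *. 
    replace (eta * / (K + 1) * Rabs d0) with (eta * Rabs d0 * / (K + 1)) by ring. lra. }
  apply Rle_trans with (K * (eta / (K + 1))).
  - apply Rmult_le_compat; auto; try apply Rabs_pos.
    apply Rmult_le_pos; [apply Rabs_pos| left; apply Rinv_0_lt_compat; auto].
  - unfold Rdiv. apply Rle_trans with ((K + 1) * (eta * / (K + 1))); [nra|].
    right. field. lra.
Qed.

Lemma U_close rho z0 B : Cone rho -> Derive rho z0 <> 0 -> 0 <= B -> forall J eta, 0 < eta ->
  exists e0, 0 < e0 /\ forall eps, 0 < eps < e0 -> forall t, Rabs t <= B ->
   Rabs (Uit rho eps z0 (/ (eps * Derive rho z0)) J t - t) <= eta.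
Proof.
  intros H1 H2 HB J. induction J as [|J IH]; intros eta Heta.
  - exists 1. split; [lra|]. intros. simpl. rewrite Rminus_diag, Rabs_R0. lra.
  - set (e := Rmin eta 1 / 2).
    assert (He : 0 < e) by (unfold e; apply Rdiv_lt_0_compat; [apply Rmin_glb_lt|]; lra).
    assert (He1 : e <= 1 / 2) by (unfold e; pose proof (Rmin_r eta 1); lra).
    assert (He2 : e + e <= eta) by (unfold e; pose proof (Rmin_l eta 1); lra).
    destruct (IH e He) as [e1 [He1p Hi1]].
    destruct (T_close rho z0 H1 H2 (B + 1) ltac:(lra) e He) as [e2 [He2p Hi2]].
    exists (Rmin e1 e2). split; [apply Rmin_glb_lt; auto|].
    intros eps [Hea Heb] t Ht. simpl.
    assert (Hm1 : eps < e1) by (pose proof (Rmin_l e1 e2); lra).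
    assert (Hm2 : eps < e2) by (pose proof (Rmin_r e1 e2); lra).
    specialize (Hi1 eps (conj Hea Hm1) t Ht).
    set (u := Uit rho eps z0 (/ (eps * Derive rho z0)) J t) in *.
    assert (Hu : Rabs u <= B + 1).
    { replace u with ((u - t) + t) by ring. eapply Rle_trans; [apply Rabs_triang|]. lra. }
    specialize (Hi2 eps (conj Hea Hm2) u Hu).
    replace (Tmap rho eps z0 (/ (eps * Derive rho z0)) u - t) with
      ((Tmap rho eps z0 (/ (eps * Derive rho z0)) u - u) + (u - t)) by ring.
    eapply Rle_trans; [apply Rabs_triang|]. lra.
Qed.

Lemma seq_small e0 : 0 < e0 -> exists N, forall n, (N <= n)%nat -> / (INR n + 1) < e0.
Proof.
  intros He. destruct (archimed (/ e0)) as [Ha _].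
  assert (Hup : 0 <= IZR (up (/ e0))).
  { pose proof (Rinv_0_lt_compat _ He). lra. }
  exists (Z.to_nat (up (/ e0))). intros n Hn.
  apply le_INR in Hn. rewrite INR_IZR_INZ, Z2Nat.id in Hn.
  2: { apply le_IZR. exact Hup. }
  assert (Hn1 : / e0 < INR n + 1) by lra.
  rewrite <- (Rinv_inv e0). apply Rinv_lt_contravar; [|exact Hn1].
  apply Rmult_lt_0_compat; [apply Rinv_0_lt_compat; auto| pose proof (pos_INR n); lra].
Qed.

Lemma comp_conv (Phi : R -> R) (Un Psi : nat -> R -> R) B : 0 < B ->
  (forall x, continuous Phi x) ->
  (forall eta, 0 < eta -> exists N, forall n, (N <= n)%nat -> forall t, Rabs t <= B -> Rabs (Un n t - t) <= eta) ->
  (forall eta, 0 < eta -> exists N, forall n, (N <= n)%nat -> forall u, Rabs u <= B + 1 -> Rabs (Psi n u - Phi u) <= eta) ->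
  forall eps, 0 < eps -> exists N, forall n, (N <= n)%nat -> forall t, Rabs t <= B ->
    Rabs (Psi n (Un n t) - Phi t) <= eps.
Proof.
  intros HB Hc HU HP eps He.
  destruct (unif_cont Phi (-(B+1)) (B+1) Hc (eps/2) ltac:(lra)) as [del [Hdel Hd]].
  destruct (HU (Rmin (del/2) 1) ltac:(apply Rmin_glb_lt; lra)) as [N1 H1].
  destruct (HP (eps/2) ltac:(lra)) as [N2 H2].
  exists (max N1 N2). intros n Hn t Ht.
  specialize (H1 n ltac:(lia) t Ht). pose proof (Rmin_l (del/2) 1). pose proof (Rmin_r (del/2) 1).
  assert (Hu : Rabs (Un n t) <= B + 1).
  { replace (Un n t) with ((Un n t - t) + t) by ring. eapply Rle_trans; [apply Rabs_triang|]. lra. }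
  specialize (H2 n ltac:(lia) _ Hu).
  assert (Hb : Rabs (Phi (Un n t) - Phi t) < eps / 2).
  { apply Hd.
    - apply Rabs_le_between. lra.
    - apply Rabs_le_between. lra.
    - lra. }
  replace (Psi n (Un n t) - Phi t) with ((Psi n (Un n t) - Phi (Un n t)) + (Phi (Un n t) - Phi t)) by ring.
  eapply Rle_trans; [apply Rabs_triang|]. lra.
Qed.

Lemma cube_0 d B x : (1 <= d)%nat -> in_cube d B x -> Rabs (x 0%nat) <= B.
Proof. intros Hd Hx. apply Rabs_le. apply Hx. lia. Qed.

Lemma cube_xt d B t : 0 < B -> Rabs t <= B -> in_cube d B (xline t).
Proof.
  intros HB Ht i _. unfold xline. destruct (Nat.eqb i 0).
  - apply Rabs_le_between. auto.
  - lra.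
Qed.

Lemma master rho d Ns B z0 (Phi : R -> R) (al0 be0 al1 be1 a0 a1 c : nat -> R) :
  (1 <= d)%nat -> Ns <> nil -> (forall N, In N Ns -> (1 <= N)%nat) -> 0 < B ->
  Cone rho -> Derive rho z0 <> 0 ->
  (forall n, a1 n = 0 \/ (2 <= last Ns 0)%nat) ->
  (forall x, continuous Phi x) ->
  (forall eta, 0 < eta -> exists N, forall n, (N <= n)%nat -> forall u, Rabs u <= B + 1 ->
     Rabs (a0 n * rho (al0 n * u + be0 n) + a1 n * rho (al1 n * u + be1 n) + c n - Phi u) <= eta) ->
  ~ in_RNN rho d Ns B (fun x => Phi (x 0%nat)) ->
  RNN_not_closed rho d Ns B.
Proof.
  intros Hd Hne HN HB H1 Hz Ha1 Hc HP Hnot.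
  set (epsn := fun n : nat => / (INR n + 1)).
  set (Un := fun n t => Uit rho (epsn n) z0 (/ (epsn n * Derive rho z0)) (length Ns - 1) t).
  set (Psi := fun n u => a0 n * rho (al0 n * u + be0 n) + a1 n * rho (al1 n * u + be1 n) + c n).
  exists (fun n x => Psi n (Un n (x 0%nat))), (fun x => Phi (x 0%nat)).
  split; [|split; [|split]]; auto.
  - intros n. apply (net_in_RNN rho d Ns B (epsn n) z0 (/ (epsn n * Derive rho z0)) (al0 n) (be0 n) (al1 n) (be1 n) (a0 n) (a1 n) (c n)); auto.
  - intros x Hx eps He. destruct (cont_eps _ _ (Hc (x 0%nat)) eps He) as [del [Hdel Hd']].
    exists del. split; [exact Hdel|]. intros y Hy Hyx. apply Hd'. apply Hyx. lia.
  - intros eps He.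
    assert (HU : forall eta, 0 < eta -> exists N, forall n, (N <= n)%nat -> forall t, Rabs t <= B -> Rabs (Un n t - t) <= eta).
    { intros eta Heta. destruct (U_close rho z0 B H1 Hz ltac:(lra) (length Ns - 1) eta Heta) as [e0 [He0 Hu]].
      destruct (seq_small e0 He0) as [N HN']. exists N. intros n Hn t Ht. apply Hu; auto.
      split; [|apply HN'; auto]. unfold epsn. apply Rinv_0_lt_compat. pose proof (pos_INR n); lra. }
    destruct (comp_conv Phi Un Psi B HB Hc HU HP eps He) as [N HNc].
    exists N. intros n Hn x Hx. apply HNc; auto. apply (cube_0 d); auto.
Qed.

Lemma Pk_le j k f : (j <= k)%nat -> Pk k f -> Pk j f.
Proof.
  intros H. induction H; auto. intros Hk. apply IHle. apply Pk_mono. auto.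
Qed.

Lemma P1_C1 f : Pk 1 f -> Cone f.
Proof.
  intros [f' [Hd Hc]].
  assert (E : forall x, Derive f x = f' x) by (intros; apply is_derive_unique; auto).
  split.
  - intros x. exists (f' x). auto.
  - intros x. apply (continuous_ext f'); [intros; symmetry; auto|]. apply Hc.
Qed.

Lemma deriv_nonzero rho : (forall x, ex_derive rho x) -> (exists x y, rho x <> rho y) ->
  exists z, Derive rho z <> 0.
Proof.
  intros Hd [x [y Hxy]].
  destruct (Classical_Prop.classic (exists z, Derive rho z <> 0)) as [H|H]; auto.
  exfalso. apply Hxy.
  destruct (mvt_rho rho Hd x y) as [c [_ Hc]].
  assert (Derive rho c = 0).
  { destruct (Classical_Prop.classic (Derive rho c = 0)); auto. exfalso; apply H; exists c; auto. }
  rewrite H0 in Hc. lra.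
Qed.

Lemma Pk_pow k m : Pk k (fun x => x ^ m).
Proof.
  induction m as [|m IH].
  - exact (Pk_const k 1).
  - apply (Pk_ext k (fun x => x * x ^ m)); [intros; reflexivity|]. apply Pk_mult; [apply Pk_id| auto].
Qed.

Lemma Derive_n_zero k t : Derive_n (fun _ => 0) k t = 0.
Proof. destruct k; [reflexivity| apply Derive_n_const]. Qed.

Lemma loc_int (f g : R -> R) a b t : a < t < b -> (forall y, a < y < b -> f y = g y) ->
  locally t (fun y => f y = g y).
Proof.
  intros Ht H. apply (locally_interval _ t (Finite a) (Finite b)); simpl; try lra.
  intros y Hy1 Hy2. apply H. simpl in *. lra.
Qed.

Lemma kink D c1 c2 delta : ex_derive D 0 -> 0 < delta ->
  (forall t, -delta < t < 0 -> D t = c1 * t) -> (forall t, 0 < t < delta -> D t = c2 * t) ->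
  c1 <> c2 -> False.
Proof.
  intros [l Hl] Hdel H1 H2 Hc.
  assert (Hcont : continuous D 0).
  { apply (@ex_derive_continuous R_AbsRing R_NormedModule). exists l. exact Hl. }
  assert (HD0 : D 0 = 0).
  { destruct (Req_dec (D 0) 0) as [E|E]; auto. exfalso.
    set (e := Rabs (D 0) / 2).
    assert (He : 0 < e) by (unfold e; apply Rdiv_lt_0_compat; [apply Rabs_pos_lt|]; lra).
    destruct (cont_eps D 0 Hcont e He) as [del [Hdl Hd]].
    set (t := Rmin (Rmin delta del) (e / (Rabs c2 + 1)) / 2).
    assert (Hm1 := Rmin_l (Rmin delta del) (e / (Rabs c2 + 1))).
    assert (Hm2 := Rmin_r (Rmin delta del) (e / (Rabs c2 + 1))).
    assert (Hm3 := Rmin_l delta del). assert (Hm4 := Rmin_r delta del).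
    assert (Hpos : 0 < e / (Rabs c2 + 1)) by (apply Rdiv_lt_0_compat; [|pose proof (Rabs_pos c2)]; lra).
    assert (Ht : 0 < t).
    { unfold t. apply Rdiv_lt_0_compat; [|lra]. apply Rmin_glb_lt; auto. apply Rmin_glb_lt; auto. }
    assert (Ht2 : t < delta /\ t < del /\ t < e / (Rabs c2 + 1)) by (unfold t in *; lra).
    specialize (Hd t ltac:(rewrite Rminus_0_r, Rabs_pos_eq; lra)).
    rewrite (H2 t ltac:(lra)) in Hd.
    assert (Habs : Rabs (c2 * t) < e).
    { rewrite Rabs_mult, (Rabs_pos_eq t) by lra.
      apply Rle_lt_trans with (Rabs c2 * (e / (Rabs c2 + 1))).
      - apply Rmult_le_compat_l; [apply Rabs_pos| lra].
      - pose proof (Rabs_pos c2). unfold Rdiv.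
        apply Rlt_le_trans with ((Rabs c2 + 1) * (e * / (Rabs c2 + 1))); [nra|].
        right; field; lra. }
    assert (Rabs (D 0) <= Rabs (c2 * t - D 0) + Rabs (c2 * t)).
    { replace (D 0) with (-(c2 * t - D 0) + c2 * t) at 1 by ring.
      eapply Rle_trans; [apply Rabs_triang|]. rewrite Rabs_Ropp. lra. }
    unfold e in *. lra. }
  apply is_derive_Reals in Hl.
  set (e := Rabs (c1 - c2) / 4).
  assert (He : 0 < e) by (unfold e; apply Rdiv_lt_0_compat; [apply Rabs_pos_lt|]; lra).
  destruct (Hl e He) as [del Hd].
  set (h := Rmin delta del / 2).
  assert (Hm1 := Rmin_l delta del). assert (Hm2 := Rmin_r delta del).
  assert (Hh : 0 < h) by (unfold h; apply Rdiv_lt_0_compat; [apply Rmin_glb_lt; auto; apply cond_pos| lra]).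
  assert (Hh2 : h < delta /\ h < del) by (unfold h; pose proof (cond_pos del); lra).
  assert (Q1 := Hd h ltac:(lra) ltac:(rewrite Rabs_pos_eq; lra)).
  assert (Q2 := Hd (-h) ltac:(lra) ltac:(rewrite Rabs_Ropp, Rabs_pos_eq; lra)).
  rewrite Rplus_0_l, HD0, H2 in Q1 by lra. rewrite Rplus_0_l, HD0, H1 in Q2 by lra.
  replace ((c2 * h - 0) / h) with c2 in Q1 by (field; lra).
  replace ((c1 * - h - 0) / - h) with c1 in Q2 by (field; lra).
  assert (Rabs (c1 - c2) <= Rabs (c1 - l) + Rabs (c2 - l)).
  { replace (c1 - c2) with ((c1 - l) - (c2 - l)) by ring.
    eapply Rle_trans; [apply Rabs_triang|]. rewrite Rabs_Ropp. lra. }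
  unfold e in *. lra.
Qed.

Lemma pow_ge_self x n : 1 <= x -> (1 <= n)%nat -> x <= x ^ n.
Proof.
  intros Hx Hn. induction Hn; simpl; [lra|].
  assert (1 <= x ^ m) by (apply pow_R1_Rle; lra). nra.
Qed.

Lemma Dpow_m m t : (1 <= m)%nat -> Derive_n (fun y => y ^ m) (m - 1) t = INR (fact m) * t.
Proof.
  intros Hm. rewrite Derive_n_pow_smalli by lia.
  replace (m - (m - 1))%nat with 1%nat by lia. simpl. field.
Qed.

Lemma Dzero_m m t : Derive_n (fun _ => 0) (m - 1) t = 0 * t.
Proof. rewrite Derive_n_zero. ring. Qed.

Lemma nonreal_kink rho d Ns B m (Phi g1 g2 : R -> R) c1 c2 :
  (1 <= d)%nat -> 0 < B -> (1 <= m)%nat -> Pk m rho ->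
  (forall y, -B < y < 0 -> Phi y = g1 y) -> (forall y, 0 < y < B -> Phi y = g2 y) ->
  (forall t, Derive_n g1 (m - 1) t = c1 * t) -> (forall t, Derive_n g2 (m - 1) t = c2 * t) ->
  c1 <> c2 ->
  ~ in_RNN rho d Ns B (fun x => Phi (x 0%nat)).
Proof.
  intros Hd HB Hm HP H1 H2 D1 D2 Hc [A [b HAb]].
  set (F := fun t => realization rho d Ns A b (xline t)).
  assert (HF : forall t, Rabs t <= B -> F t = Phi t).
  { intros t Ht. unfold F. rewrite <- HAb by (apply cube_xt; auto). reflexivity. }
  assert (CF : Ck m F) by (apply Pk_to_Ck; apply real_line_Pk; auto).
  destruct CF as [CF1 _].
  assert (Hex : ex_derive (Derive_n F (m - 1)) 0).
  { specialize (CF1 m 0 (le_n m)). assert (E : m = S (m - 1)) by lia. rewrite E in CF1. exact CF1. }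
  apply (kink (Derive_n F (m - 1)) c1 c2 B Hex HB); auto.
  - intros t Ht. rewrite <- D1. apply Derive_n_ext_loc.
    apply (loc_int _ _ (-B) 0); auto. intros y Hy. rewrite HF by (apply Rabs_le; lra). apply H1. lra.
  - intros t Ht. rewrite <- D2. apply Derive_n_ext_loc.
    apply (loc_int _ _ 0 B); auto. intros y Hy. rewrite HF by (apply Rabs_le; lra). apply H2. lra.
Qed.

Lemma pow_N_ge N m : 1 <= N -> (1 <= m)%nat -> N <= N ^ m.
Proof. intros; apply pow_ge_self; auto. Qed.

Lemma Lp1 rho s N u m : 1 <= N -> (1 <= m)%nat -> Rabs (rho (N * u) - (N * u) ^ m) <= s ->
  Rabs (/ N ^ m * rho (N * u) - u ^ m) <= s / N.
Proof.
  intros HN Hm H. rewrite Rpow_mult_distr in H.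
  assert (HNm : N <= N ^ m) by (apply pow_N_ge; auto).
  replace (/ N ^ m * rho (N * u) - u ^ m) with (/ N ^ m * (rho (N * u) - N ^ m * u ^ m)) by (field; lra).
  rewrite Rabs_mult, Rabs_inv, (Rabs_pos_eq (N ^ m)) by lra.
  assert (0 <= s) by (eapply Rle_trans; [apply Rabs_pos| exact H]).
  unfold Rdiv. rewrite Rmult_comm.
  apply Rmult_le_compat; try lra; [apply Rabs_pos| left; apply Rinv_0_lt_compat; lra|].
  apply Rinv_le_contravar; lra.
Qed.

Lemma Lp2 rho s N u m o K : 1 <= N -> (o < m)%nat -> Rabs u <= K -> 1 <= K ->
  Rabs (rho (N * u) - (N * u) ^ o) <= s ->
  Rabs (/ N ^ m * rho (N * u)) <= (s + K ^ o) / N.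
Proof.
  intros HN Hom Hu HK H.
  assert (0 <= s) by (eapply Rle_trans; [apply Rabs_pos| exact H]).
  assert (HNo : 1 <= N ^ o) by (apply pow_R1_Rle; lra).
  assert (HKo : 0 <= K ^ o) by (apply pow_le; lra).
  assert (Hr : Rabs (rho (N * u)) <= N ^ o * (s + K ^ o)).
  { replace (rho (N * u)) with ((rho (N * u) - (N * u) ^ o) + (N * u) ^ o) by ring.
    eapply Rle_trans; [apply Rabs_triang|].
    rewrite <- RPow_abs, Rabs_mult, (Rabs_pos_eq N) by lra. rewrite (Rpow_mult_distr N (Rabs u)).
    assert (Rabs u ^ o <= K ^ o) by (apply pow_incr; split; [apply Rabs_pos| auto]).
    assert (N ^ o * Rabs u ^ o <= N ^ o * K ^ o) by (apply Rmult_le_compat_l; lra).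
    assert (s <= N ^ o * s) by (rewrite <- (Rmult_1_l s) at 1; apply Rmult_le_compat_r; lra). lra. }
  assert (HNm : N ^ m = N ^ o * N ^ (m - o)) by (rewrite <- pow_add; f_equal; lia).
  assert (HN2 : N <= N ^ (m - o)) by (apply pow_N_ge; auto; lia).
  rewrite Rabs_mult, Rabs_inv, (Rabs_pos_eq (N ^ m)) by (apply pow_le; lra).
  rewrite HNm.
  apply Rle_trans with (/ (N ^ o * N ^ (m - o)) * (N ^ o * (s + K ^ o))).
  { apply Rmult_le_compat_l; auto. left; apply Rinv_0_lt_compat. nra. }
  replace (/ (N ^ o * N ^ (m - o)) * (N ^ o * (s + K ^ o))) with ((s + K ^ o) * / N ^ (m - o)) by (field; lra).
  unfold Rdiv. apply Rmult_le_compat_l; [lra|]. apply Rinv_le_contravar; lra.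
Qed.

Lemma INRS_ge1 n : 1 <= INR n + 1.
Proof. pose proof (pos_INR n). lra. Qed.

Lemma case3 d Ns B rho : (1 <= d)%nat -> Ns <> nil -> (forall N, In N Ns -> (1 <= N)%nat) -> 0 < B ->
  (exists r q : nat, r <> q /\ approx_homogeneous r q rho /\ Ck (Nat.max r q) rho) ->
  RNN_not_closed rho d Ns B.
Proof.
  intros Hd Hne HN HB [r [q [Hrq [[s [Hs [Hp Hn]]] HC]]]].
  set (m := Nat.max r q) in *.
  assert (Hm : (1 <= m)%nat) by (unfold m; lia).
  assert (Pm : Pk m rho) by (apply Ck_to_Pk; auto).
  assert (H1 : Cone rho) by (apply P1_C1; apply (Pk_le 1 m); auto).
  assert (Hnc : exists x y, rho x <> rho y).
  { destruct (Classical_Prop.classic (exists x y, rho x <> rho y)) as [H|H]; auto. exfalso.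
    assert (Hc : forall x, rho x = rho 0).
    { intros x. destruct (Classical_Prop.classic (rho x = rho 0)) as [E|E]; auto. exfalso; apply H; eauto. }
    destruct (Nat.eq_dec r 0) as [Hr0|Hr0].
    - assert (Hq : (1 <= q)%nat) by lia.
      set (t := - (Rabs (rho 0) + s + 1)).
      assert (Ht : 1 <= Rabs t) by (unfold t; rewrite Rabs_Ropp, Rabs_pos_eq; pose proof (Rabs_pos (rho 0)); lra).
      specialize (Hn t ltac:(unfold t; pose proof (Rabs_pos (rho 0)); lra)). rewrite Hc in Hn.
      assert (Rabs t <= Rabs (t ^ q)) by (rewrite <- RPow_abs; apply pow_ge_self; auto).
      assert (Rabs (t ^ q) <= Rabs (rho 0 - t ^ q) + Rabs (rho 0)).
      { replace (t ^ q) with (-(rho 0 - t ^ q) + rho 0) at 1 by ring.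
        eapply Rle_trans; [apply Rabs_triang|]. rewrite Rabs_Ropp. lra. }
      unfold t in Ht. rewrite Rabs_Ropp, Rabs_pos_eq in Ht by (pose proof (Rabs_pos (rho 0)); lra).
      unfold t in *. rewrite Rabs_Ropp, (Rabs_pos_eq (Rabs (rho 0) + s + 1)) in * by (pose proof (Rabs_pos (rho 0)); lra).
      lra.
    - set (t := Rabs (rho 0) + s + 1).
      assert (Ht : 1 <= t) by (unfold t; pose proof (Rabs_pos (rho 0)); lra).
      specialize (Hp t ltac:(lra)). rewrite Hc in Hp.
      assert (t <= t ^ r) by (apply pow_ge_self; auto; lia).
      assert (t ^ r <= Rabs (rho 0 - t ^ r) + Rabs (rho 0)).
      { replace (t ^ r) with (-(rho 0 - t ^ r) + rho 0) at 1 by ring.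
        eapply Rle_trans; [apply Rle_abs|]. eapply Rle_trans; [apply Rabs_triang|]. rewrite Rabs_Ropp. lra. }
      unfold t in *. lra. }
  destruct (deriv_nonzero rho (proj1 H1) Hnc) as [z0 Hz0].
  set (K := B + 1).
  assert (HK : 1 <= K) by (unfold K; lra).
  set (a0 := fun n : nat => / (INR n + 1) ^ m).
  set (al0 := fun n : nat => INR n + 1).
  set (zz := fun _ : nat => 0).
  assert (Hsimp : forall n u, a0 n * rho (al0 n * u + zz n) + zz n * rho (zz n * u + zz n) + zz n
     = / (INR n + 1) ^ m * rho ((INR n + 1) * u)).
  { intros. unfold a0, al0, zz. replace ((INR n + 1) * u + 0) with ((INR n + 1) * u) by ring. ring. }
  set (C := s + K ^ r + K ^ q + s).
  assert (HC0 : 0 < C) by (unfold C; pose proof (pow_le K r); pose proof (pow_le K q); lra).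
  assert (Nbig : forall eta, 0 < eta -> exists N, forall n, (N <= n)%nat -> C / (INR n + 1) <= eta).
  { intros eta Heta. destruct (seq_small (eta / C) ltac:(apply Rdiv_lt_0_compat; auto)) as [N HN'].
    exists N. intros n Hn0. specialize (HN' n Hn0). pose proof (INRS_ge1 n).
    unfold Rdiv in *. apply Rmult_lt_compat_l with (r := C) in HN'; auto.
    replace (C * (eta * / C)) with eta in HN' by (field; lra). lra. }
  destruct (Compare_dec.lt_dec q r) as [Hqr|Hqr].
  -
    assert (Hmr : m = r) by (unfold m; lia).
    set (Phi := fun u => ((u + Rabs u) / 2) ^ m).
    apply (master rho d Ns B z0 Phi al0 zz zz zz a0 zz zz); auto.
    + intros x. apply (Pk_comp 0 (fun y => y ^ m) (fun u => (u + Rabs u) / 2)).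
      * apply Pk_pow.
      * apply (Pk_ext 0 (fun u => (u + Rabs u) * / 2)); [intros; reflexivity|].
        apply Pk_mult; [apply Pk_plus; [apply Pk_id| intros y; apply continuous_Rabs]| apply Pk_const].
    + intros eta Heta. destruct (Nbig eta Heta) as [N HN']. exists N. intros n Hn0 u Hu.
      rewrite Hsimp. specialize (HN' n Hn0). pose proof (INRS_ge1 n) as HN1.
      unfold Phi. destruct (Rle_dec 0 u) as [Hu0|Hu0].
      * rewrite (Rabs_pos_eq u) by auto. replace ((u + u) / 2) with u by field.
        assert (Hx := Hp ((INR n + 1) * u) ltac:(apply Rmult_le_pos; lra)).
        rewrite <- Hmr in Hx. eapply Rle_trans; [apply Lp1; eauto|].
        apply Rle_trans with (C / (INR n + 1)); auto. unfold Rdiv. apply Rmult_le_compat_r.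
        { left; apply Rinv_0_lt_compat; lra. } unfold C; pose proof (pow_le K r); pose proof (pow_le K q); lra.
      * rewrite (Rabs_left u) by lra. replace ((u + - u) / 2) with 0 by field. rewrite pow_i by lia.
        rewrite Rminus_0_r.
        assert (Hx := Hn ((INR n + 1) * u) ltac:(apply Rmult_le_0_l; lra)).
        eapply Rle_trans; [apply (Lp2 rho s (INR n + 1) u m q K); auto; lia|].
        apply Rle_trans with (C / (INR n + 1)); auto. unfold Rdiv. apply Rmult_le_compat_r.
        { left; apply Rinv_0_lt_compat; lra. } unfold C; pose proof (pow_le K r); lra.
    + apply (nonreal_kink rho d Ns B m Phi (fun _ => 0) (fun y => y ^ m) 0 (INR (fact m))); auto.
      * intros y Hy. unfold Phi. rewrite Rabs_left by lra. replace ((y + - y) / 2) with 0 by field. apply pow_i. lia.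
      * intros y Hy. unfold Phi. rewrite Rabs_pos_eq by lra. f_equal. field.
      * intros t. apply Dzero_m.
      * intros t. apply Dpow_m; auto.
      * pose proof (INR_fact_neq_0 m). auto.
  -
    assert (Hmq : m = q) by (unfold m; lia).
    set (Phi := fun u => ((u - Rabs u) / 2) ^ m).
    apply (master rho d Ns B z0 Phi al0 zz zz zz a0 zz zz); auto.
    + intros x. apply (Pk_comp 0 (fun y => y ^ m) (fun u => (u - Rabs u) / 2)).
      * apply Pk_pow.
      * apply (Pk_ext 0 (fun u => (u + (-1) * Rabs u) * / 2)); [intros; unfold Rdiv; ring|].
        apply Pk_mult; [apply Pk_plus; [apply Pk_id| apply Pk_mult; [apply Pk_const| intros y; apply continuous_Rabs]]| apply Pk_const].
    + intros eta Heta. destruct (Nbig eta Heta) as [N HN']. exists N. intros n Hn0 u Hu.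
      rewrite Hsimp. specialize (HN' n Hn0). pose proof (INRS_ge1 n) as HN1.
      unfold Phi. destruct (Rle_dec u 0) as [Hu0|Hu0].
      * rewrite (Rabs_left1 u) by auto. replace ((u - - u) / 2) with u by field.
        assert (Hx := Hn ((INR n + 1) * u) ltac:(apply Rmult_le_0_l; lra)).
        rewrite <- Hmq in Hx. eapply Rle_trans; [apply Lp1; eauto|].
        apply Rle_trans with (C / (INR n + 1)); auto. unfold Rdiv. apply Rmult_le_compat_r.
        { left; apply Rinv_0_lt_compat; lra. } unfold C; pose proof (pow_le K r); pose proof (pow_le K q); lra.
      * rewrite (Rabs_pos_eq u) by lra. replace ((u - u) / 2) with 0 by field. rewrite pow_i by lia.
        rewrite Rminus_0_r.
        assert (Hx := Hp ((INR n + 1) * u) ltac:(apply Rmult_le_pos; lra)).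
        eapply Rle_trans; [apply (Lp2 rho s (INR n + 1) u m r K); auto; lia|].
        apply Rle_trans with (C / (INR n + 1)); auto. unfold Rdiv. apply Rmult_le_compat_r.
        { left; apply Rinv_0_lt_compat; lra. } unfold C; pose proof (pow_le K q); lra.
    + apply (nonreal_kink rho d Ns B m Phi (fun y => y ^ m) (fun _ => 0) (INR (fact m)) 0); auto.
      * intros y Hy. unfold Phi. rewrite Rabs_left by lra. f_equal. field.
      * intros y Hy. unfold Phi. rewrite Rabs_pos_eq by lra. replace ((y - y) / 2) with 0 by field. apply pow_i. lia.
      * intros t. apply Dpow_m; auto.
      * intros t. apply Dzero_m.
      * pose proof (INR_fact_neq_0 m). auto.
Qed.

Lemma Ck_const_fun k rho : (forall x, rho x = rho 0) -> Ck k rho.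
Proof.
  intros H. apply Pk_to_Ck. apply (Pk_ext k (fun _ => rho 0)); [intros; symmetry; auto| apply Pk_const].
Qed.

Lemma case1 d Ns B rho : (1 <= d)%nat -> Ns <> nil -> (forall N, In N Ns -> (1 <= N)%nat) -> 0 < B ->
  ((2 <= last Ns 0%nat)%nat /\ Ck 1 rho /\ ~ Cinf rho) ->
  RNN_not_closed rho d Ns B.
Proof.
  intros Hd Hne HN HB [H2 [HC1 HnC]].
  assert (H1 : Cone rho) by (apply P1_C1; apply Ck_to_Pk; auto).
  assert (Hk : exists k, (1 <= k)%nat /\ Ck k rho /\ ~ Ck (S k) rho).
  { apply NNPP. intros Hno. apply HnC. intros k.
    assert (G : forall j, Ck (S j) rho).
    { induction j as [|j IH]; auto.
      apply NNPP. intros Hj. apply Hno. exists (S j). split; [lia| auto]. }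
    destruct k as [|k]; auto. apply Pk_to_Ck. apply (Pk_le 0 1); auto. apply Ck_to_Pk; auto. }
  destruct Hk as [k [Hk1 [Hk HnSk]]].
  assert (Hz : exists z, ~ ((forall m, (m <= S k)%nat -> ex_derive_n rho m z) /\ continuous (Derive_n rho (S k)) z)).
  { apply NNPP. intros Hno. apply HnSk. split.
    - intros m x Hm. apply NNPP. intros Hx. apply Hno. exists x. intros [Ha _]. apply Hx, Ha, Hm.
    - intros x. apply NNPP. intros Hx. apply Hno. exists x. intros [_ Hb]. apply Hx, Hb. }
  destruct Hz as [z Hz].
  assert (Hnc : exists x y, rho x <> rho y).
  { apply NNPP. intros Hno. apply HnC. intros k'. apply Ck_const_fun. intros x.
    apply NNPP. intros Hx. apply Hno. exists x, 0. auto. }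
  destruct (deriv_nonzero rho (proj1 H1) Hnc) as [z0 Hz0].
  set (Phi := fun u => Derive rho (u + z)).
  set (hh := fun n : nat => / (INR n + 1)).
  assert (Hhpos : forall n, 0 < hh n) by (intros; unfold hh; apply Rinv_0_lt_compat; pose proof (pos_INR n); lra).
  apply (master rho d Ns B z0 Phi (fun _ => 1) (fun n => z + hh n) (fun _ => 1) (fun _ => z)
          (fun n => / hh n) (fun n => - / hh n) (fun _ => 0)); auto.
  - intros x. unfold Phi. apply (continuous_comp (fun u => u + z) (Derive rho)).
    + apply (continuous_plus (fun u => u) (fun _ => z)); [apply continuous_id| apply continuous_const].
    + apply (proj2 H1).
  - intros eta Heta.
    destruct (unif_cont (Derive rho) (z - (B + 1) - 1) (z + (B + 1) + 1) (proj2 H1) eta Heta) as [del [Hdel Hud]].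
    destruct (seq_small (Rmin del 1) ltac:(apply Rmin_glb_lt; lra)) as [N HNs].
    exists N. intros n Hn u Hu. specialize (HNs n Hn). fold (hh n) in HNs.
    pose proof (Rmin_l del 1). pose proof (Rmin_r del 1). pose proof (Hhpos n).
    destruct (mvt_rho rho (proj1 H1) (1 * u + z) (1 * u + (z + hh n))) as [c [Hc1 Hc2]].
    replace (/ hh n * rho (1 * u + (z + hh n)) + - / hh n * rho (1 * u + z) + 0 - Phi u)
      with ((rho (1 * u + (z + hh n)) - rho (1 * u + z)) / hh n - Phi u) by (field; lra).
    rewrite Hc2. replace (1 * u + (z + hh n) - (1 * u + z)) with (hh n) by ring.
    replace (Derive rho c * hh n / hh n) with (Derive rho c) by (field; lra).
    unfold Phi. left. apply Hud.
    + unfold Rmin, Rmax in Hc1. apply Rabs_le_between in Hu. destruct (Rle_dec _ _); lra.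
    + apply Rabs_le_between in Hu. lra.
    + unfold Rmin, Rmax in Hc1. destruct (Rle_dec _ _); apply Rabs_def1; lra.
  - intros [A [b HAb]].
    set (F := fun t => realization rho d Ns A b (xline t)).
    assert (HF : forall t, Rabs t <= B -> F t = Phi t).
    { intros t Ht. unfold F. rewrite <- HAb by (apply cube_xt; auto). reflexivity. }
    set (psi := fun y => F (y + - z)).
    assert (Ppsi : Pk k psi).
    { apply (Pk_comp k F (fun y => y + - z)).
      - apply real_line_Pk. apply Ck_to_Pk; auto.
      - apply Pk_plus; [apply Pk_id| apply Pk_const]. }
    destruct (Pk_to_Ck k psi Ppsi) as [Cp1 Cp2].
    assert (Hloc : forall y, z - B < y < z + B -> Derive rho y = psi y).
    { intros y Hy. unfold psi. rewrite HF by (apply Rabs_le; lra). unfold Phi. f_equal. ring. }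
    assert (Hlocz : forall y, z - B < y < z + B -> locally y (fun t => psi t = Derive rho t)).
    { intros y Hy. apply (loc_int _ _ (z - B) (z + B)); auto. intros t Ht. symmetry; auto. }
    apply Hz. split.
    + intros m Hm. destruct m as [|[|m]].
      * exact I.
      * simpl. apply (proj1 H1).
      * apply ex_derive_n_Sshift. apply (ex_derive_n_ext_loc psi).
        { apply Hlocz. lra. }
        apply Cp1. lia.
    + apply (continuous_ext (Derive_n (Derive rho) k)).
      { intros t. symmetry. apply Derive_n_Sshift. }
      apply (continuous_ext_loc _ (Derive_n psi k)).
      * apply (loc_int _ _ (z - B) (z + B)); [lra|]. intros y Hy. apply Derive_n_ext_loc. apply Hlocz. auto.
      * apply Cp2.
Qed.

Lemma sum_shift_diff (a p : nat -> R) N j : (forall n, Rabs (a n) <= p n) ->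
  Rabs (sum_f_R0 a (N + j) - sum_f_R0 a N) <= sum_f_R0 p (N + j) - sum_f_R0 p N.
Proof.
  intros H. induction j as [|j IH].
  - rewrite Nat.add_0_r. rewrite Rminus_diag, Rabs_R0. lra.
  - rewrite Nat.add_succ_r. simpl.
    replace (sum_f_R0 a (N + j) + a (S (N + j)) - sum_f_R0 a N) with
      ((sum_f_R0 a (N + j) - sum_f_R0 a N) + a (S (N + j))) by ring.
    eapply Rle_trans; [apply Rabs_triang|]. specialize (H (S (N + j))). lra.
Qed.

Lemma sum_diff_le (a p : nat -> R) N M : (N <= M)%nat -> (forall n, Rabs (a n) <= p n) ->
  Rabs (sum_f_R0 a M - sum_f_R0 a N) <= sum_f_R0 p M - sum_f_R0 p N.
Proof.
  intros HNM H. replace M with (N + (M - N))%nat by lia. apply sum_shift_diff; auto.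
Qed.

Lemma sum_mono p N M : (forall n, 0 <= p n) -> (N <= M)%nat -> sum_f_R0 p N <= sum_f_R0 p M.
Proof.
  intros Hp H. pose proof (sum_diff_le p p N M H) as G.
  assert (forall n, Rabs (p n) <= p n) by (intros; rewrite Rabs_pos_eq; auto; lra).
  specialize (G H0). pose proof (Rle_abs (sum_f_R0 p M - sum_f_R0 p N)).
  pose proof (Rabs_pos (sum_f_R0 p M - sum_f_R0 p N)).
  lra.
Qed.

Lemma tail_bound (a p : nat -> R) la lp : is_series a la -> is_series p lp ->
  (forall n, Rabs (a n) <= p n) -> forall N, Rabs (la - sum_f_R0 a N) <= lp - sum_f_R0 p N.
Proof.
  intros Ha Hp H N.
  apply is_series_Reals in Ha. apply is_series_Reals in Hp.
  destruct (Rle_dec (Rabs (la - sum_f_R0 a N)) (lp - sum_f_R0 p N)) as [G|G]; auto. exfalso.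
  set (D := Rabs (la - sum_f_R0 a N) - (lp - sum_f_R0 p N)).
  assert (HD : 0 < D / 2) by (unfold D; lra).
  destruct (Ha _ HD) as [N1 H1]. destruct (Hp _ HD) as [N2 H2].
  set (M := max N (max N1 N2)).
  specialize (H1 M ltac:(unfold M; lia)). specialize (H2 M ltac:(unfold M; lia)).
  unfold R_dist in *.
  pose proof (sum_diff_le a p N M ltac:(unfold M; lia) H).
  assert (Rabs (la - sum_f_R0 a N) <= Rabs (sum_f_R0 a M - la) + Rabs (sum_f_R0 a M - sum_f_R0 a N)).
  { replace (la - sum_f_R0 a N) with (-(sum_f_R0 a M - la) + (sum_f_R0 a M - sum_f_R0 a N)) by ring.
    eapply Rle_trans; [apply Rabs_triang|]. rewrite Rabs_Ropp. lra. }
  pose proof (Rle_abs (sum_f_R0 p M - lp)) as Q1. pose proof (Rle_abs (-(sum_f_R0 p M - lp))) as Q2.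
  rewrite Rabs_Ropp in Q2. unfold D in *. lra.
Qed.

Lemma partial_le p l : (forall n, 0 <= p n) -> is_series p l -> forall N, sum_f_R0 p N <= l.
Proof.
  intros Hp Hs N. pose proof (tail_bound p p l l Hs Hs) as T.
  assert (forall n, Rabs (p n) <= p n) by (intros; rewrite Rabs_pos_eq; auto; lra).
  specialize (T H N). pose proof (Rle_abs (l - sum_f_R0 p N)). pose proof (Rabs_pos (l - sum_f_R0 p N)).
  lra.
Qed.

Lemma series_nonneg p : (forall n, 0 <= p n) -> ex_series p -> 0 <= Series p.
Proof.
  intros Hp He. pose proof (partial_le p (Series p) Hp (Series_correct _ He) 0). simpl in H.
  specialize (Hp 0%nat). lra.
Qed.

Lemma term_le p n : (forall n, 0 <= p n) -> ex_series p -> p n <= Series p.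
Proof.
  intros Hp He. pose proof (partial_le p (Series p) Hp (Series_correct _ He) n).
  destruct n; simpl in *; [lra|].
  pose proof (sum_mono p 0 n Hp ltac:(lia)). simpl in H0. specialize (Hp 0%nat). lra.
Qed.

Lemma fin_interchange (w : nat -> nat -> R) (V : nat -> R) :
  (forall n, is_series (fun k => w k n) (V n)) ->
  forall N, is_series (fun k => sum_f_R0 (fun n => w k n) N) (sum_f_R0 V N).
Proof.
  intros H N. induction N as [|N IH]; simpl; auto.
  apply (is_series_plus (fun k => sum_f_R0 (fun n => w k n) N) (fun k => w k (S N))); auto.
Qed.

Lemma unif_finite (P : nat -> nat -> Prop) :
  (forall k, exists N, forall n, (N <= n)%nat -> P k n) ->
  forall K, exists N, forall k n, (k <= K)%nat -> (N <= n)%nat -> P k n.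
Proof.
  intros H K. induction K as [|K IH].
  - destruct (H 0%nat) as [N HN]. exists N. intros k n Hk Hn. replace k with 0%nat by lia. auto.
  - destruct IH as [N1 H1]. destruct (H (S K)) as [N2 H2]. exists (max N1 N2).
    intros k n Hk Hn. destruct (Nat.eq_dec k (S K)) as [->|Hne].
    + apply H2. lia.
    + apply H1; lia.
Qed.

Lemma sum_le_const (Q : nat -> R) c K : (forall k, (k <= K)%nat -> Q k <= c) ->
  sum_f_R0 Q K <= INR (S K) * c.
Proof.
  induction K as [|K IH]; intros H.
  - simpl. specialize (H 0%nat (le_n 0)). lra.
  - rewrite S_INR. simpl sum_f_R0.
    assert (sum_f_R0 Q K <= INR (S K) * c) by (apply IH; intros; apply H; lia).
    specialize (H (S K) (le_n _)). lra.
Qed.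

Lemma fubini (w : nat -> nat -> R) :
  (forall k, ex_series (fun n => Rabs (w k n))) ->
  ex_series (fun k => Series (fun n => Rabs (w k n))) ->
  is_series (fun n => Series (fun k => w k n)) (Series (fun k => Series (fun n => w k n))).
Proof.
  intros Hrow Htot.
  set (T := fun k => Series (fun n => Rabs (w k n))).
  assert (HT0 : forall k, 0 <= T k) by (intros; apply series_nonneg; auto; intros; apply Rabs_pos).
  assert (F1 : forall k n, Rabs (w k n) <= T k).
  { intros k n. apply (term_le (fun n => Rabs (w k n))); auto. intros; apply Rabs_pos. }
  assert (F2 : forall n, ex_series (fun k => w k n)).
  { intros n. apply ex_series_Rabs. apply (@ex_series_le R_AbsRing R_CompleteNormedModule _ T); auto.
    intros k. unfold norm; simpl. unfold abs; simpl. rewrite Rabs_Rabsolu. apply F1. }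
  assert (F3 : forall k, ex_series (fun n => w k n)) by (intros; apply ex_series_Rabs; auto).
  set (Sr := fun k => Series (fun n => w k n)).
  set (V := fun n => Series (fun k => w k n)).
  assert (HSa : forall k, Rabs (Sr k) <= T k) by (intros; apply Series_Rabs; auto).
  assert (F4 : ex_series Sr).
  { apply (@ex_series_le R_AbsRing R_CompleteNormedModule _ T); auto. }
  apply is_series_Reals. intros eps He.
  assert (HTs : is_series T (Series T)) by (apply Series_correct; auto).
  pose proof (proj1 (is_series_Reals _ _) HTs) as HTi.
  destruct (HTi (eps / 3) ltac:(lra)) as [K HK]. specialize (HK K (le_n K)). unfold R_dist in HK.
  set (e2 := eps / 3 / INR (S K)).
  assert (He2 : 0 < e2) by (unfold e2; apply Rdiv_lt_0_compat; [lra| apply lt_0_INR; lia]).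
  assert (Hrows : forall k, exists N, forall n, (N <= n)%nat -> T k - sum_f_R0 (fun n => Rabs (w k n)) n < e2).
  { intros k. assert (Hk : is_series (fun n => Rabs (w k n)) (T k)) by (apply Series_correct; auto).
    apply is_series_Reals in Hk. destruct (Hk e2 He2) as [N HN]. exists N. intros n Hn.
    specialize (HN n Hn). unfold R_dist in HN. rewrite Rabs_minus_sym in HN.
    pose proof (Rle_abs (T k - sum_f_R0 (fun n0 : nat => Rabs (w k n0)) n)). lra. }
  destruct (unif_finite _ Hrows K) as [N HN].
  exists N. intros N' HN'. unfold R_dist.
  assert (HV : forall n, is_series (fun k => w k n) (V n)) by (intros; apply Series_correct; auto).
  pose proof (fin_interchange w V HV N') as HP.
  set (P := fun k => sum_f_R0 (fun n => w k n) N') in *.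
  set (Q := fun k => T k - sum_f_R0 (fun n => Rabs (w k n)) N').
  set (R_ := fun k => Sr k - P k).
  assert (HRQ : forall k, Rabs (R_ k) <= Q k).
  { intros k. unfold R_, Q, Sr, P. apply tail_bound; auto; try (apply Series_correct; auto).
    intros; apply Rle_refl. }
  assert (HQT : forall k, Q k <= T k).
  { intros k. unfold Q. assert (0 <= sum_f_R0 (fun n => Rabs (w k n)) N').
    { apply cond_pos_sum. intros; apply Rabs_pos. } lra. }
  assert (HRT : forall k, Rabs (R_ k) <= T k) by (intros; eapply Rle_trans; eauto).
  assert (HRs : is_series R_ (Series Sr - sum_f_R0 V N')).
  { unfold R_. apply (is_series_minus Sr P); auto. apply Series_correct; auto. }
  assert (HRsm : is_series R_ (Series R_)) by (apply Series_correct; eexists; eauto).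
  pose proof (is_series_unique _ _ HRs) as ER.
  pose proof (tail_bound R_ T (Series R_) (Series T) HRsm HTs HRT K) as Htail.
  assert (Hfin : Rabs (sum_f_R0 R_ K) <= sum_f_R0 Q K).
  { eapply Rle_trans; [apply sum_f_R0_triangle|]. apply sum_Rle. intros; apply HRQ. }
  assert (HQK : sum_f_R0 Q K <= INR (S K) * e2).
  { apply sum_le_const. intros k Hk. left. apply (HN k N' Hk HN'). }
  assert (HK2 : INR (S K) * e2 = eps / 3) by (unfold e2; field; apply not_0_INR; lia).
  assert (Rabs (Series R_) <= Rabs (Series R_ - sum_f_R0 R_ K) + Rabs (sum_f_R0 R_ K)).
  { replace (Series R_) with ((Series R_ - sum_f_R0 R_ K) + sum_f_R0 R_ K) at 1 by ring. apply Rabs_triang. }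
  pose proof (Rle_abs (sum_f_R0 T K - Series T)) as Q1. pose proof (Rle_abs (-(sum_f_R0 T K - Series T))) as Q2.
  rewrite Rabs_Ropp in Q2.
  replace (sum_f_R0 V N' - Series Sr) with (- Series R_) by (rewrite ER; ring).
  rewrite Rabs_Ropp. lra.
Qed.

Definition an_at (f : R -> R) x0 (a : nat -> R) r :=
  0 < r /\ forall x, Rabs (x - x0) < r -> is_pseries a (x - x0) (f x).

Lemma ps_plus (a b : nat -> R) (x la lb : R) : is_pseries a x la -> is_pseries b x lb ->
  is_pseries (fun n => a n + b n) x (la + lb).
Proof.
  intros Ha Hb. apply is_pseries_R in Ha. apply is_pseries_R in Hb. apply is_pseries_R.
  pose proof (is_series_plus _ _ _ _ Ha Hb) as H.
  apply (is_series_ext (fun n => plus (a n * x ^ n) (b n * x ^ n))); [|exact H].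
  intros n. unfold plus; simpl. ring.
Qed.

Lemma ps_scal (a : nat -> R) (x l c : R) : is_pseries a x l -> is_pseries (fun n => c * a n) x (c * l).
Proof.
  intros Ha. apply is_pseries_R in Ha. apply is_pseries_R.
  pose proof (is_series_scal_l c _ _ Ha) as H.
  apply (is_series_ext (fun n => scal c (a n * x ^ n))); [|exact H].
  intros n. unfold scal; simpl. unfold mult; simpl. ring.
Qed.

Lemma ps_fin2 (a : nat -> R) (x : R) : (forall n, (2 <= n)%nat -> a n = 0) -> is_pseries a x (a 0%nat + a 1%nat * x).
Proof.
  intros H. apply is_pseries_R. apply is_series_Reals. intros eps He. exists 1%nat. intros n Hn.
  assert (E : forall m, sum_f_R0 (fun k => a k * x ^ k) (S m) = a 0%nat + a 1%nat * x).
  { induction m as [|m IH].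
    - simpl. ring.
    - simpl in *. rewrite IH. rewrite (H (S (S m))) by lia. ring. }
  destruct n as [|n]; [lia|]. rewrite E. unfold R_dist. rewrite Rminus_diag, Rabs_R0. lra.
Qed.

Definition cst (c : R) : nat -> R := fun n => if Nat.eqb n 0 then c else 0.

Lemma ps_cst c x : is_pseries (cst c) x c.
Proof.
  pose proof (ps_fin2 (cst c) x) as H.
  replace c with (cst c 0%nat + cst c 1%nat * x) at 2 by (unfold cst; simpl; ring).
  apply H. intros n Hn. unfold cst. destruct n; [lia| reflexivity].
Qed.

Lemma term_le_sum p n N : (forall k, 0 <= p k) -> (n <= N)%nat -> p n <= sum_f_R0 p N.
Proof.
  intros Hp H. induction H.
  - destruct n; simpl; [lra|]. pose proof (cond_pos_sum p n Hp). lra.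
  - simpl. specialize (Hp (S m)). lra.
Qed.

Lemma conv_radius a x : ex_pseries a x -> Rbar_le (Rabs x) (CV_radius a).
Proof.
  intros H. apply ex_pseries_R in H. apply ex_series_lim_0 in H. apply is_lim_seq_Reals in H.
  destruct (H 1 ltac:(lra)) as [N HN].
  destruct (CV_radius_bounded a) as [Hub _]. apply Hub.
  exists (sum_f_R0 (fun n => Rabs (a n * x ^ n)) N + 1). intros n.
  rewrite Rabs_mult, RPow_abs, Rabs_Rabsolu, <- Rabs_mult.
  destruct (Compare_dec.le_lt_dec n N) as [Hn|Hn].
  - pose proof (term_le_sum (fun n => Rabs (a n * x ^ n)) n N (fun k => Rabs_pos _) Hn). simpl in H0. lra.
  - specialize (HN n ltac:(lia)). unfold R_dist in HN. rewrite Rminus_0_r in HN.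
    pose proof (cond_pos_sum (fun n => Rabs (a n * x ^ n)) N (fun k => Rabs_pos _)). lra.
Qed.

Lemma rad_from_conv c r : 0 < r -> (forall v, 0 <= v < r -> ex_pseries c v) -> Rbar_le r (CV_radius c).
Proof.
  intros Hr H. pose proof (CV_radius_ge_0 c) as H0.
  destruct (CV_radius c) as [R| |] eqn:E; simpl in *; auto.
  destruct (Rle_dec r R) as [G|G]; auto. exfalso.
  assert (Hv : 0 <= (R + r) / 2 < r) by lra.
  pose proof (conv_radius c _ (H _ Hv)) as Hc. rewrite E in Hc. simpl in Hc.
  rewrite Rabs_pos_eq in Hc by lra. lra.
Qed.

Lemma rad_of_rep f x0 a r : an_at f x0 a r -> Rbar_le r (CV_radius a).
Proof.
  intros [Hr H]. apply rad_from_conv; auto. intros v Hv.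
  assert (Hv2 : Rabs (x0 + v - x0) < r).
  { replace (x0 + v - x0) with v by ring. rewrite Rabs_pos_eq; lra. }
  specialize (H (x0 + v) Hv2).
  replace (x0 + v - x0) with v in H by ring. eexists; eauto.
Qed.

Lemma rbar_lt_of (r : R) (RR : Rbar) (x : R) : Rbar_le r RR -> Rabs x < r -> Rbar_lt (Rabs x) RR.
Proof. intros H1 H2. destruct RR; simpl in *; try tauto; lra. Qed.

Lemma an_const c x0 : an_at (fun _ => c) x0 (cst c) 1.
Proof. split; [lra|]. intros. apply ps_cst. Qed.

Lemma an_idf x0 : an_at (fun x => x) x0 (fun n => if Nat.eqb n 0 then x0 else if Nat.eqb n 1 then 1 else 0) 1.
Proof.
  split; [lra|]. intros x _.
  pose proof (ps_fin2 (fun n => if Nat.eqb n 0 then x0 else if Nat.eqb n 1 then 1 else 0) (x - x0)) as H.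
  simpl in H. replace x with (x0 + 1 * (x - x0)) at 2 by ring. apply H.
  intros n Hn. destruct n as [|[|n]]; [lia|lia|reflexivity].
Qed.

Lemma analytic_const c : analytic (fun _ => c).
Proof. intros x0. exists (cst c), 1. apply an_const. Qed.

Lemma analytic_id : analytic (fun x => x).
Proof. intros x0. eexists _, 1. apply an_idf. Qed.

Lemma analytic_plus f g : analytic f -> analytic g -> analytic (fun x => f x + g x).
Proof.
  intros Hf Hg x0. destruct (Hf x0) as [a [ra [Hra Ha]]]. destruct (Hg x0) as [b [rb [Hrb Hb]]].
  exists (fun n => a n + b n), (Rmin ra rb). split; [apply Rmin_glb_lt; auto|].
  intros x Hx. pose proof (Rmin_l ra rb). pose proof (Rmin_r ra rb).
  apply ps_plus; [apply Ha| apply Hb]; lra.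
Qed.

Lemma analytic_scal c f : analytic f -> analytic (fun x => c * f x).
Proof.
  intros Hf x0. destruct (Hf x0) as [a [ra [Hra Ha]]].
  exists (fun n => c * a n), ra. split; auto. intros x Hx. apply ps_scal. auto.
Qed.

Lemma analytic_ext f g : (forall x, f x = g x) -> analytic f -> analytic g.
Proof.
  intros E Hf x0. destruct (Hf x0) as [a [ra [Hra Ha]]]. exists a, ra. split; auto.
  intros x Hx. rewrite <- E. auto.
Qed.

Lemma cv_abs (a : nat -> R) : CV_radius (fun n => Rabs (a n)) = CV_radius a.
Proof.
  unfold CV_radius. apply Lub_Rbar_eqset. intros r. unfold CV_disk.
  split; apply ex_series_ext; intros n; rewrite !Rabs_mult, Rabs_Rabsolu; reflexivity.
Qed.

Lemma cont_pt_eps f x : continuity_pt f x ->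
  forall eps, 0 < eps -> exists delta, 0 < delta /\ forall y, Rabs (y - x) < delta -> Rabs (f y - f x) < eps.
Proof.
  intros Hp eps He.
  destruct (proj1 (continuity_pt_locally f x) Hp (mkposreal eps He)) as [del Hd].
  exists del. split; [apply cond_pos|]. intros y Hy. apply Hd. exact Hy.
Qed.

Definition e0 : nat -> R := fun n => if Nat.eqb n 0 then 1 else 0.

Lemma ps_e0 x : is_pseries e0 x 1.
Proof. apply (ps_cst 1 x). Qed.

Lemma PS_mult_abs (a b a' b' : nat -> R) n :
  (forall k, Rabs (a k) <= a' k) -> (forall k, Rabs (b k) <= b' k) ->
  Rabs (PS_mult a b n) <= PS_mult a' b' n.
Proof.
  intros Ha Hb. unfold PS_mult. eapply Rle_trans; [apply sum_f_R0_triangle|].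
  apply sum_Rle. intros k _. rewrite Rabs_mult.
  apply Rmult_le_compat; try apply Rabs_pos; auto.
Qed.

Lemma PS_mult_nonneg (a b : nat -> R) n : (forall k, 0 <= a k) -> (forall k, 0 <= b k) -> 0 <= PS_mult a b n.
Proof.
  intros Ha Hb. unfold PS_mult. apply cond_pos_sum. intros k. apply Rmult_le_pos; auto.
Qed.

Lemma an_comp f g x0 : analytic f -> (exists b rg, an_at g x0 b rg) ->
  exists e d, an_at (fun x => f (g x)) x0 e d.
Proof.
  intros Hf [b [rg [Hrg Hg]]].
  set (y0 := g x0).
  destruct (Hf y0) as [a [rf [Hrf Hfr]]].
  assert (Hb0 : b 0%nat = y0).
  { specialize (Hg x0 ltac:(rewrite Rminus_diag, Rabs_R0; lra)). rewrite Rminus_diag in Hg.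
    apply is_pseries_unique in Hg. rewrite PSeries_0 in Hg. exact Hg. }
  set (b' := fun n => b n + -1 * cst y0 n).
  assert (Hb'0 : b' 0%nat = 0) by (unfold b', cst; simpl; rewrite Hb0; ring).
  assert (Hg' : forall x, Rabs (x - x0) < rg -> is_pseries b' (x - x0) (g x - y0)).
  { intros x Hx. replace (g x - y0) with (g x + -1 * y0) by ring. apply ps_plus; auto.
    apply ps_scal. apply ps_cst. }
  assert (Rb' : Rbar_le rg (CV_radius b')) by (apply (rad_of_rep (fun x => g x - y0) x0); split; auto).
  set (bb := fun n => Rabs (b' n)).
  assert (Rbb : Rbar_le rg (CV_radius bb)) by (unfold bb; rewrite cv_abs; auto).
  assert (bb0 : forall n, 0 <= bb n) by (intros; apply Rabs_pos).
  set (beta := PSeries bb).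
  assert (Hbeta : forall v, Rabs v < rg -> is_pseries bb v (beta v)).
  { intros v Hv. apply PSeries_correct. apply CV_radius_inside. apply (rbar_lt_of rg); auto. }
  assert (Hbeta0 : beta 0 = 0) by (unfold beta; rewrite PSeries_0; unfold bb; rewrite Hb'0; apply Rabs_R0).
  assert (Cbeta : continuity_pt beta 0).
  { apply PSeries_continuity. apply (rbar_lt_of rg); auto. rewrite Rabs_R0; auto. }
  destruct (cont_pt_eps beta 0 Cbeta rf Hrf) as [d1 [Hd1 Hd1']].
  set (pw := fun k => Nat.iter k (PS_mult b') e0).
  set (pwa := fun k => Nat.iter k (PS_mult bb) e0).
  assert (Pow : forall k,
    (forall n, Rabs (pw k n) <= pwa k n) /\ (forall n, 0 <= pwa k n) /\
    (forall v, 0 <= v < rg -> is_pseries (pwa k) v (beta v ^ k)) /\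
    Rbar_le rg (CV_radius (pwa k)) /\ Rbar_le rg (CV_radius (pw k)) /\
    (forall x, Rabs (x - x0) < rg -> is_pseries (pw k) (x - x0) ((g x - y0) ^ k))).
  { assert (Rad : forall c c', (forall n, Rabs (c n) <= c' n) -> (forall n, 0 <= c' n) ->
       (forall v, 0 <= v < rg -> exists l, is_pseries c' v l) ->
       Rbar_le rg (CV_radius c') /\ Rbar_le rg (CV_radius c)).
    { intros c c' Hc Hc' Hcv. split.
      - apply rad_from_conv; auto.
      - apply rad_from_conv; auto. intros v Hv. destruct (Hcv v Hv) as [l Hl].
        apply ex_pseries_R. apply is_pseries_R in Hl.
        apply (@ex_series_le R_AbsRing R_CompleteNormedModule _ (fun n => c' n * v ^ n)); [|eexists; eauto].
        intros n. unfold norm; simpl. unfold abs; simpl. rewrite Rabs_mult, <- RPow_abs, (Rabs_pos_eq v) by lra.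
        apply Rmult_le_compat_r; auto. apply pow_le; lra. }
    induction k as [|k IH].
    - assert (A1 : forall n, Rabs (pw 0%nat n) <= pwa 0%nat n).
      { intros n. simpl. unfold e0. destruct (Nat.eqb n 0); rewrite ?Rabs_R1, ?Rabs_R0; lra. }
      assert (A2 : forall n, 0 <= pwa 0%nat n) by (intros n; simpl; unfold e0; destruct (Nat.eqb n 0); lra).
      assert (A3 : forall v, 0 <= v < rg -> is_pseries (pwa 0%nat) v (beta v ^ 0)) by (intros; simpl; apply ps_e0).
      destruct (Rad (pw 0%nat) (pwa 0%nat) A1 A2 ltac:(intros v Hv; eexists; apply A3; eauto)) as [R1 R2].
      repeat split; auto. intros; simpl; apply ps_e0.
    - destruct IH as [I1 [I2 [I3 [I4 [I5 I6]]]]].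
      assert (A1 : forall n, Rabs (pw (S k) n) <= pwa (S k) n) by (intros n; apply PS_mult_abs; auto; intros; apply Rle_refl).
      assert (A2 : forall n, 0 <= pwa (S k) n) by (intros n; apply PS_mult_nonneg; auto).
      assert (A3 : forall v, 0 <= v < rg -> is_pseries (pwa (S k)) v (beta v ^ S k)).
      { intros v Hv. simpl pow. apply is_pseries_mult.
        - apply Hbeta. rewrite Rabs_pos_eq; lra.
        - apply I3; auto.
        - apply (rbar_lt_of rg); auto. rewrite Rabs_pos_eq; lra.
        - apply (rbar_lt_of rg); auto. rewrite Rabs_pos_eq; lra. }
      destruct (Rad (pw (S k)) (pwa (S k)) A1 A2 ltac:(intros v Hv; eexists; apply A3; eauto)) as [R1 R2].
      repeat split; auto. intros x Hx. simpl pow. apply is_pseries_mult; auto.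
      + apply (rbar_lt_of rg); auto.
      + apply (rbar_lt_of rg); auto. }
  set (d := Rmin d1 rg).
  exists (fun n => Series (fun k => a k * pw k n)), d.
  split; [apply Rmin_glb_lt; auto|].
  intros x Hx. pose proof (Rmin_l d1 rg). pose proof (Rmin_r d1 rg).
  assert (Hxg : Rabs (x - x0) < rg) by (unfold d in *; lra).
  assert (Hxd : Rabs (x - x0) < d1) by (unfold d in *; lra).
  set (u := x - x0) in *. set (v := Rabs u).
  assert (Hv0 : 0 <= v) by apply Rabs_pos.
  assert (Hvr : v < rg) by (unfold v, d in *; lra).
  set (G := g x - y0).
  assert (HG : Rabs G <= beta v).
  { assert (Hs := Hg' x Hxg). apply is_pseries_R in Hs.
    assert (Hsa := Hbeta v ltac:(unfold v; rewrite Rabs_Rabsolu; lra)). apply is_pseries_R in Hsa.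
    unfold G. rewrite <- (is_series_unique _ _ Hs), <- (is_series_unique _ _ Hsa).
    assert (E : forall n, bb n * v ^ n = Rabs (b' n * u ^ n)).
    { intros n. unfold bb, v. rewrite Rabs_mult, RPow_abs. reflexivity. }
    rewrite (Series_ext _ _ E). apply Series_Rabs.
    apply (ex_series_ext _ _ E). eexists; eauto. }
  assert (Hbv : beta v < rf).
  { specialize (Hd1' v ltac:(rewrite Rminus_0_r; unfold v; rewrite Rabs_Rabsolu; exact Hxd)).
    rewrite Hbeta0, Rminus_0_r in Hd1'. pose proof (Rle_abs (beta v)). lra. }
  assert (HGr : Rabs G < rf) by lra.
  assert (Hfg : is_pseries a G (f (g x))).
  { specialize (Hfr (g x) HGr). exact Hfr. }
  assert (Hbeta_nn : 0 <= beta v) by (eapply Rle_trans; [apply Rabs_pos| exact HG]).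
  set (w := fun k n => a k * (pw k n * u ^ n)).
  assert (Hrow : forall k, is_series (fun n => w k n) (a k * G ^ k)).
  { intros k. destruct (Pow k) as [_ [_ [_ [_ [_ P6]]]]].
    specialize (P6 x Hxg). apply is_pseries_R in P6.
    pose proof (is_series_scal_l (a k) _ _ P6) as Hs. exact Hs. }
  assert (Wbound : forall k n, Rabs (w k n) <= Rabs (a k) * (pwa k n * v ^ n)).
  { intros k n. destruct (Pow k) as [P1 _]. unfold w. rewrite !Rabs_mult.
    apply Rmult_le_compat_l; [apply Rabs_pos|]. unfold v. rewrite RPow_abs.
    apply Rmult_le_compat_r; [apply Rabs_pos| auto]. }
  assert (Wsum : forall k, is_series (fun n => Rabs (a k) * (pwa k n * v ^ n)) (Rabs (a k) * beta v ^ k)).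
  { intros k. destruct (Pow k) as [_ [_ [P3 _]]]. specialize (P3 v ltac:(lra)). apply is_pseries_R in P3.
    exact (is_series_scal_l (Rabs (a k)) _ _ P3). }
  assert (Hwrow : forall k, ex_series (fun n => Rabs (w k n))).
  { intros k. apply (@ex_series_le R_AbsRing R_CompleteNormedModule _ (fun n => Rabs (a k) * (pwa k n * v ^ n))).
    - intros n. unfold norm; simpl. unfold abs; simpl. rewrite Rabs_Rabsolu. apply Wbound.
    - eexists; apply Wsum. }
  assert (Hsumrow : forall k, Series (fun n => Rabs (w k n)) <= Rabs (a k) * beta v ^ k).
  { intros k. rewrite <- (is_series_unique _ _ (Wsum k)). apply Series_le; [|eexists; apply Wsum].
    intros n. split; [apply Rabs_pos| apply Wbound]. }
  assert (Ra : Rbar_le rf (CV_radius a)) by (apply (rad_of_rep f y0); split; auto).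
  assert (Hgeo : ex_series (fun k => Rabs (a k) * beta v ^ k)).
  { assert (Hin : Rbar_lt (Rabs (beta v)) (CV_radius a)).
    { apply (rbar_lt_of rf); auto. rewrite Rabs_pos_eq; auto. }
    pose proof (CV_disk_inside a (beta v) Hin) as Hd.
    apply (ex_series_ext (fun n => Rabs (a n * beta v ^ n))); [|exact Hd].
    intros k. rewrite Rabs_mult, <- RPow_abs, (Rabs_pos_eq (beta v)) by auto. reflexivity. }
  assert (Htot : ex_series (fun k => Series (fun n => Rabs (w k n)))).
  { apply (@ex_series_le R_AbsRing R_CompleteNormedModule _ (fun k => Rabs (a k) * beta v ^ k)); auto.
    intros k. unfold norm; simpl. unfold abs; simpl.
    rewrite Rabs_pos_eq; [apply Hsumrow|]. apply series_nonneg; auto. intros; apply Rabs_pos. }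
  pose proof (fubini w Hwrow Htot) as HF.
  assert (E1 : Series (fun k => Series (fun n => w k n)) = f (g x)).
  { rewrite (Series_ext _ (fun k => a k * G ^ k)) by (intros k; apply is_series_unique; apply Hrow).
    apply is_series_unique. apply is_pseries_R. exact Hfg. }
  rewrite E1 in HF.
  apply is_pseries_R.
  apply (is_series_ext (fun n => Series (fun k => w k n))); [|exact HF].
  intros n. unfold w. rewrite <- Series_scal_r. apply Series_ext. intros k. ring.
Qed.

Lemma analytic_comp f g : analytic f -> analytic g -> analytic (fun x => f (g x)).
Proof.
  intros Hf Hg x0. destruct (Hg x0) as [b [rg Hb]].
  destruct (an_comp f g x0 Hf (ex_intro _ b (ex_intro _ rg Hb))) as [e [d Hed]].
  exists e, d. exact Hed.
Qed.

Lemma analytic_rsum n (F : nat -> R -> R) :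
  (forall j, (j < n)%nat -> analytic (F j)) -> analytic (fun t => rsum n (fun j => F j t)).
Proof.
  induction n as [|n IH]; intros H.
  - apply (analytic_ext (fun _ => 0)); [intros; reflexivity| apply analytic_const].
  - apply (analytic_ext (fun t => rsum n (fun j => F j t) + F n t)).
    { intros; symmetry; apply rsum_S. }
    apply analytic_plus; [apply IH; intros; apply H; lia| apply H; lia].
Qed.

Lemma hidden_an rho dims A b : analytic rho ->
  forall l i, analytic (fun t => hidden_out rho dims A b l (xline t) i).
Proof.
  intros Hr l. induction l as [|l IH]; intros i; simpl.
  - unfold xline. destruct (Nat.eqb i 0); [apply analytic_id| apply analytic_const].
  - apply (analytic_comp rho (fun t => rsum (dims l) (fun j => A (S l) i j * hidden_out rho dims A b l (xline t) j) + b (S l) i)); auto.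
    apply analytic_plus; [|apply analytic_const]. apply analytic_rsum. intros j _.
    apply analytic_scal. apply IH.
Qed.

Lemma real_line_an rho d Ns A b : analytic rho ->
  analytic (fun t => realization rho d Ns A b (xline t)).
Proof.
  intros Hr. unfold realization.
  apply analytic_plus; [|apply analytic_const]. apply analytic_rsum. intros j _.
  apply analytic_scal. apply hidden_an; auto.
Qed.

Lemma an_deriv f x0 a r : an_at f x0 a r -> forall y, Rabs (y - x0) < r ->
  is_derive f y (PSeries (PS_derive a) (y - x0)).
Proof.
  intros [Hr Hrep] y Hy.
  assert (Ra : Rbar_le r (CV_radius a)) by (apply (rad_of_rep f x0); split; auto).
  apply (is_derive_ext_loc (fun t => PSeries a (t - x0))).
  - apply (loc_int _ _ (x0 - r) (x0 + r)).
    + apply Rabs_def2 in Hy. lra.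
    + intros t Ht. apply is_pseries_unique. apply Hrep. apply Rabs_def1; lra.
  - replace (PSeries (PS_derive a) (y - x0)) with (1 * PSeries (PS_derive a) (y - x0)) by ring.
    apply (is_derive_comp (PSeries a) (fun t => t - x0) y).
    + apply is_derive_PSeries. apply (rbar_lt_of r); auto.
    + auto_derive; auto.
Qed.

Lemma analytic_Cone f : analytic f -> Cone f.
Proof.
  intros Hf. split.
  - intros x. destruct (Hf x) as [a [r Har]]. exists (PSeries (PS_derive a) (x - x)).
    apply (an_deriv f x a r Har). rewrite Rminus_diag, Rabs_R0. apply Har.
  - intros x. destruct (Hf x) as [a [r Har]].
    assert (Ra : Rbar_le r (CV_radius a)) by (apply (rad_of_rep f x); auto).
    apply (continuous_ext_loc _ (fun y => PSeries (PS_derive a) (y - x))).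
    + apply (loc_int _ _ (x - r) (x + r)); [destruct Har; lra|].
      intros y Hy. symmetry. apply is_derive_unique. apply (an_deriv f x a r Har). apply Rabs_def1; lra.
    + apply (continuous_comp (fun y => y - x) (PSeries (PS_derive a))).
      * apply (continuous_plus (fun y => y) (fun _ => - x)); [apply continuous_id| apply continuous_const].
      * apply continuity_pt_filterlim. apply PSeries_continuity. rewrite CV_radius_derive.
        apply (rbar_lt_of r); auto. rewrite Rminus_diag, Rabs_R0. apply Har.
Qed.

Lemma cont_left_zero D eps : continuity_pt D 0 -> 0 < eps -> (forall u, -eps < u < 0 -> D u = 0) -> D 0 = 0.
Proof.
  intros Hc He H. destruct (Req_dec (D 0) 0) as [E|E]; auto. exfalso.
  destruct (cont_pt_eps D 0 Hc (Rabs (D 0)) (Rabs_pos_lt _ E)) as [del [Hdel Hd]].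
  set (u := - Rmin del eps / 2).
  assert (Hm1 := Rmin_l del eps). assert (Hm2 := Rmin_r del eps).
  assert (Hpos : 0 < Rmin del eps) by (apply Rmin_glb_lt; auto).
  specialize (Hd u ltac:(unfold u; rewrite Rminus_0_r, Rabs_left; lra)).
  rewrite H in Hd by (unfold u; lra). rewrite Rminus_0_l, Rabs_Ropp in Hd. lra.
Qed.

Lemma coef_zero h m a r eps : an_at h m a r -> 0 < eps ->
  (forall t, m - eps < t < m -> h t = 0) -> forall n, a n = 0.
Proof.
  intros [Hr Hrep] He Hz n.
  assert (Ra : Rbar_le r (CV_radius a)) by (apply (rad_of_rep h m); split; auto).
  set (e' := Rmin eps r). assert (Hm1 : e' <= eps) by apply Rmin_l. assert (Hm2 : e' <= r) by apply Rmin_r.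
  assert (He' : 0 < e') by (apply Rmin_glb_lt; auto).
  assert (HP0 : forall u, -e' < u < 0 -> PSeries a u = 0).
  { intros u Hu. apply is_pseries_unique.
    specialize (Hrep (m + u) ltac:(replace (m + u - m) with u by ring; rewrite Rabs_left; lra)).
    replace (m + u - m) with u in Hrep by ring. rewrite Hz in Hrep by lra. exact Hrep. }
  set (D := PSeries (PS_derive_n n a)).
  assert (HD : forall u, -e' < u < 0 -> D u = 0).
  { intros u Hu. unfold D. rewrite <- Derive_n_PSeries.
    - rewrite (Derive_n_ext_loc _ (fun _ => 0)). apply Derive_n_zero.
      apply (loc_int _ _ (-e') 0); [exact Hu|]. intros y Hy. apply HP0. auto.
    - apply (rbar_lt_of r); auto. rewrite Rabs_left; lra. }
  assert (Hc : continuity_pt D 0).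
  { apply PSeries_continuity. rewrite CV_radius_derive_n. apply (rbar_lt_of r); auto. rewrite Rabs_R0; auto. }
  pose proof (cont_left_zero D e' Hc He' HD) as HD0.
  unfold D in HD0. rewrite PSeries_0 in HD0. unfold PS_derive_n in HD0.
  simpl (0 + n)%nat in HD0. simpl (fact 0) in HD0.
  pose proof (INR_fact_neq_0 n).
  apply Rmult_integral in HD0. destruct HD0 as [HD0|HD0]; auto.
  exfalso. simpl in HD0. unfold Rdiv in HD0. rewrite Rinv_1, Rmult_1_r in HD0. auto.
Qed.

Lemma ident h B : analytic h -> 0 < B -> (forall t, -B < t < B -> h t = 0) -> forall t, 0 <= t -> h t = 0.
Proof.
  intros Ha HB Hz. apply NNPP. intros Hno. apply not_all_ex_not in Hno. destruct Hno as [t1 Ht1].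
  apply imply_to_and in Ht1. destruct Ht1 as [Ht1 Hh1].
  set (E := fun s => 0 <= s /\ forall t, 0 <= t <= s -> h t = 0).
  assert (Hbd : bound E).
  { exists t1. intros s [Hs Hst]. destruct (Rle_dec s t1) as [G|G]; auto. exfalso. apply Hh1, Hst. lra. }
  assert (HE0 : exists x, E x) by (exists 0; split; [lra|]; intros t Ht; apply Hz; lra).
  destruct (completeness E Hbd HE0) as [m [Hub Hleast]].
  assert (HmB : B / 2 <= m).
  { apply Hub. split; [lra|]. intros t Ht. apply Hz. lra. }
  assert (Hbelow : forall t, 0 <= t < m -> h t = 0).
  { intros t Ht. apply NNPP. intros Hne.
    assert (is_upper_bound E t).
    { intros s [Hs Hst]. destruct (Rle_dec s t) as [G|G]; auto. exfalso. apply Hne, Hst. lra. }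
    specialize (Hleast t H). lra. }
  destruct (Ha m) as [a [r Har]].
  assert (Ha0 : forall n, a n = 0).
  { apply (coef_zero h m a r m Har ltac:(lra)). intros t Ht. apply Hbelow. lra. }
  destruct Har as [Hr Hrep].
  assert (Hball : forall x, Rabs (x - m) < r -> h x = 0).
  { intros x Hx. specialize (Hrep x Hx).
    assert (H0 : is_pseries a (x - m) 0).
    { apply (is_pseries_ext (cst 0)); [|apply ps_cst]. intros n. rewrite Ha0. unfold cst. destruct (Nat.eqb n 0); auto. }
    apply is_pseries_unique in Hrep. apply is_pseries_unique in H0. congruence. }
  assert (E (m + r / 2)).
  { split; [lra|]. intros t Ht. destruct (Rlt_dec t m) as [G|G].
    - apply Hbelow. lra.
    - apply Hball. apply Rabs_def1; lra. }
  specialize (Hub _ H). lra.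
Qed.

Lemma rsum_bound n (c v : nat -> R) M : (forall j, Rabs (v j) <= M) ->
  Rabs (rsum n (fun j => c j * v j)) <= rsum n (fun j => Rabs (c j)) * M.
Proof.
  intros H. induction n as [|n IH].
  - unfold rsum; simpl. rewrite Rabs_R0. lra.
  - rewrite !rsum_S. eapply Rle_trans; [apply Rabs_triang|]. rewrite Rabs_mult.
    assert (Rabs (c n) * Rabs (v n) <= Rabs (c n) * M) by (apply Rmult_le_compat_l; [apply Rabs_pos| auto]).
    lra.
Qed.

Lemma real_bounded rho d Ns A b M : Ns <> nil -> (forall x, Rabs (rho x) <= M) ->
  exists Mb, forall t, Rabs (realization rho d Ns A b (xline t)) <= Mb.
Proof.
  intros Hne HM. destruct Ns as [|N0 Ns']; [congruence|].
  exists (rsum (arch_dims d (N0 :: Ns') (pred (S (length (N0 :: Ns'))))) (fun j => Rabs (A (S (length (N0 :: Ns'))) 0%nat j)) * M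
     + Rabs (b (S (length (N0 :: Ns'))) 0%nat)).
  intros t. unfold realization. eapply Rle_trans; [apply Rabs_triang|].
  apply Rplus_le_compat_r. apply rsum_bound. intros j. simpl pred. simpl length. simpl hidden_out. apply HM.
Qed.

Lemma case2 d Ns B rho : (1 <= d)%nat -> Ns <> nil -> (forall N, In N Ns -> (1 <= N)%nat) -> 0 < B ->
  ((2 <= last Ns 0%nat)%nat /\ bounded_fun rho /\ analytic rho /\ ~ constant_fun rho) ->
  RNN_not_closed rho d Ns B.
Proof.
  intros Hd Hne HN HB [H2 [[M HM] [Han Hnc]]].
  assert (H1 : Cone rho) by (apply analytic_Cone; auto).
  assert (Hnc' : exists x y, rho x <> rho y).
  { apply NNPP. intros Hno. apply Hnc. intros x y. apply NNPP. intros Hxy. apply Hno. eauto. }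
  destruct (deriv_nonzero rho (proj1 H1) Hnc') as [z0 Hz0].
  set (dz := Derive rho z0) in *.
  set (Phi := fun u => dz * u).
  set (K := B + 1).
  apply (master rho d Ns B z0 Phi (fun n => / (INR n + 1)) (fun _ => z0) (fun _ => 0) (fun _ => 0)
          (fun n => INR n + 1) (fun _ => 0) (fun n => - (INR n + 1) * rho z0)); auto.
  - intros x. unfold Phi. apply (continuous_mult (fun _ => dz) (fun u => u)); [apply continuous_const| apply continuous_id].
  - intros eta Heta.
    destruct (cont_eps _ _ (proj2 H1 z0) (eta / K) ltac:(unfold K; apply Rdiv_lt_0_compat; lra)) as [del [Hdel Hc]].
    destruct (seq_small (del / K) ltac:(unfold K; apply Rdiv_lt_0_compat; lra)) as [N HNs].
    exists N. intros n Hn u Hu. specialize (HNs n Hn).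
    set (hn := / (INR n + 1)) in *.
    assert (HN1 : 1 <= INR n + 1) by (pose proof (pos_INR n); lra).
    assert (Hh : 0 < hn) by (unfold hn; apply Rinv_0_lt_compat; lra).
    destruct (mvt_rho rho (proj1 H1) z0 (hn * u + z0)) as [c [Hc1 Hc2]].
    assert (Hinv : (INR n + 1) * hn = 1) by (unfold hn; field; lra).
    replace ((INR n + 1) * rho (hn * u + z0) + 0 * rho (0 * u + 0) + - (INR n + 1) * rho z0 - Phi u)
      with ((INR n + 1) * (rho (hn * u + z0) - rho z0) - dz * u) by (unfold Phi; ring).
    rewrite Hc2. replace (hn * u + z0 - z0) with (hn * u) by ring.
    assert (Eq : (INR n + 1) * (Derive rho c * (hn * u)) - dz * u = u * (Derive rho c - dz)).
    { replace ((INR n + 1) * (Derive rho c * (hn * u))) with (((INR n + 1) * hn) * (Derive rho c * u)) by ring.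
      rewrite Hinv. ring. }
    rewrite Eq.
    rewrite Rabs_mult.
    assert (Hcz : Rabs (c - z0) < del).
    { eapply Rle_lt_trans; [apply between_abs; exact Hc1|].
      replace (hn * u + z0 - z0) with (hn * u) by ring. rewrite Rabs_mult, (Rabs_pos_eq hn) by lra.
      apply Rle_lt_trans with (hn * K); [apply Rmult_le_compat_l; unfold K; lra|].
      apply (Rmult_lt_compat_r K) in HNs; [|unfold K; lra]. unfold Rdiv in HNs.
      rewrite Rmult_assoc, Rinv_l, Rmult_1_r in HNs by (unfold K; lra). exact HNs. }
    specialize (Hc c Hcz). fold dz in Hc.
    apply Rle_trans with (K * (eta / K)).
    + apply Rmult_le_compat; try apply Rabs_pos; auto. left; auto.
    + right. field. unfold K; lra.
  - intros [A [b HAb]].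
    set (F := fun t => realization rho d Ns A b (xline t)).
    destruct (real_bounded rho d Ns A b M Hne HM) as [Mb HMb].
    assert (HF : forall t, Rabs t <= B -> F t = dz * t).
    { intros t Ht. unfold F. rewrite <- HAb by (apply cube_xt; auto). reflexivity. }
    assert (Hh : analytic (fun t => F t + (- dz) * t)).
    { apply analytic_plus; [apply real_line_an; auto| apply analytic_scal; apply analytic_id]. }
    pose proof (ident _ B Hh HB) as Hid.
    assert (Hz : forall t, -B < t < B -> F t + - dz * t = 0).
    { intros t Ht. rewrite HF by (apply Rabs_le; lra). ring. }
    specialize (Hid Hz).
    assert (HMb0 : 0 <= Mb) by (eapply Rle_trans; [apply Rabs_pos| apply (HMb 0)]).
    set (t := (Mb + 1) / Rabs dz).
    assert (Hdz : 0 < Rabs dz) by (apply Rabs_pos_lt; auto).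
    assert (Ht : 0 <= t) by (unfold t; apply Rmult_le_pos; [lra| left; apply Rinv_0_lt_compat; auto]).
    specialize (Hid t Ht). specialize (HMb t). fold (F t) in HMb.
    replace (F t) with (dz * t) in HMb by lra.
    rewrite Rabs_mult, (Rabs_pos_eq t) in HMb by auto. unfold t in HMb.
    replace (Rabs dz * ((Mb + 1) / Rabs dz)) with (Mb + 1) in HMb by (field; lra). lra.
Qed.

Theorem theorem3p3 (d : nat) (Ns : list nat) (B : R) (rho : R -> R) :
  (1 <= d)%nat ->
  Ns <> nil ->
  (forall N, In N Ns -> (1 <= N)%nat) ->
  0 < B ->
  ( ((2 <= last Ns 0%nat)%nat /\ Ck 1 rho /\ ~ Cinf rho)
    \/ ((2 <= last Ns 0%nat)%nat /\ bounded_fun rho /\ analytic rho /\ ~ constant_fun rho)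
    \/ (exists r q : nat, r <> q /\ approx_homogeneous r q rho /\ Ck (Nat.max r q) rho) ) ->
  RNN_not_closed rho d Ns B.
Proof.
  intros Hd Hne HN HB [H|[H|H]].
  - apply case1; auto.
  - apply case2; auto.
  - apply case3; auto.
Qed.
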